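(* Let $\phi:\mathbb R^3\to\mathbb C$ be a separately continuous function admitting a factorization $\phi(s,t,u)=\langle\alpha(s),\theta(t)\beta(u)\rangle$ for all $(s,t,u)\in\mathbb R^3$, where $E,F$ are Hilbert spaces (not necessarily separable) and $\alpha:\mathbb R\to E$, $\theta:\mathbb R\to\mathcal B(F,E)$, $\beta:\mathbb R\to F$ satisfy $\sup_s\|\alpha(s)\|\le1$, $\sup_t\|\theta(t)\|\le1$, $\sup_u\|\beta(u)\|\le1$ (equivalently, $\|\phi\|_{(\ell^1_{\mathbb R}\otimes_h\ell^1_{\mathbb R}\otimes_h\ell^1_{\mathbb R})^*}\le1$). Then there exist continuous functions $\alpha_m,\beta_n,\theta_{m,n}\in C(\mathbb R)$, $m,n\ge1$, such that $\sum_m|\alpha_m(s)|^2\le1$ for all $s\in\mathbb R$, $\sum_n|\beta_n(u)|^2\le1$ for all $u\in\mathbb R$, $\|[\theta_{m,n}(t)]_{m,n\ge1}\|_{\mathcal B(\ell^2)}\le1$ for all $t\in\mathbb R$, and $$\phi(s,t,u)=\big\langle(\alpha_m(s))_m,\ [\theta_{m,n}(t)]\,(\beta_n(u))_n\big\rangle_{\ell^2}\quad\text{for all }(s,t,u)\in\mathbb R^3.$$ In particular, if $f\in C^2(\mathbb R)$ is such that $f^{[2]}$ belongs to $(\ell^1_{\mathbb R}\otimes_h\ell^1_{\mathbb R}\otimes_h\ell^1_{\mathbb R})^*$, then there exist a separable Hilbert space $H$ and bounded Borel functions $a,b:\mathbb R^2\to H$ with $f^{[2]}(s,t,u)=\langle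 a(s,t),b(t,u)\rangle$ for all $(s,t,u)\in\mathbb R^3$.
   Context: $\otimes_h$ denotes the Haagerup tensor product and $\ell^1_{\mathbb R}$ the space of absolutely summable families indexed by $\mathbb R$. The dual space $(\ell^1_{\mathbb R}\otimes_h\ell^1_{\mathbb R}\otimes_h\ell^1_{\mathbb R})^*$ is identified with the space of functions $\phi:\mathbb R^3\to\mathbb C$ admitting a factorization $\phi(s,t,u)=\langle\alpha(s),\theta(t)\beta(u)\rangle$ with Hilbert spaces $E,F$ and bounded $\alpha:\mathbb R\to E$, $\theta:\mathbb R\to\mathcal B(F,E)$, $\beta:\mathbb R\to F$; $\phi$ has norm $\le1$ in this dual exactly when such a factorization exists with $\sup\|\alpha\|,\sup\|\theta\|,\sup\|\beta\|\le1$. Divided differences: $f^{[1]}(x_0,x_1)=\frac{f(x_0)-f(x_1)}{x_0-x_1}$ ($x_0\ne x_1$), $=f'(x_0)$ ($x_0=x_1$); $f^{[2]}(x_0,x_1,x_2)=\frac{f^{[1]}(x_0,x_2)-f^{[1]}(x_1,x_2)}{x_0-x_1}$ ($x_0\ne x_1$), $=\partial_1f^{[1]}(x_1,x_2)$ ($x_0=x_1$). *)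

(* Defs.v *)
From Stdlib Require Import Reals.
From Coquelicot Require Import Coquelicot.
Open Scope R_scope.

Record Hilbert := {
  hcar :> ModuleSpace C_Ring;
  hinner : hcar -> hcar -> C;
  hinner_addl : forall x y z : hcar,
      hinner (plus x y) z = Cplus (hinner x z) (hinner y z);
  hinner_scall : forall (a : C) (x y : hcar),
      hinner (scal a x) y = Cmult a (hinner x y);
  hinner_sym : forall x y : hcar, hinner y x = Cconj (hinner x y);
  hinner_pos : forall x : hcar, 0 <= Re (hinner x x);
  hinner_def : forall x : hcar, hinner x x = RtoC 0 -> x = zero;
  hcomplete : forall u : nat -> hcar,
      (forall eps, 0 < eps -> exists N : nat, forall m n, (N <= m)%nat -> (N <= n)%nat ->
          sqrt (Re (hinner (minus (u m) (u n)) (minus (u m) (u n)))) < eps) ->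
      exists l : hcar, forall eps, 0 < eps -> exists N : nat, forall n, (N <= n)%nat ->
          sqrt (Re (hinner (minus (u n) l) (minus (u n) l))) < eps
}.

Definition hnorm (H : Hilbert) (x : H) : R := sqrt (Re (hinner H x x)).

Definition Clinear (F E : Hilbert) (T : F -> E) : Prop :=
  (forall x y : F, T (plus x y) = plus (T x) (T y)) /\
  (forall (a : C) (x : F), T (scal a x) = scal a (T x)).

Definition separable (H : Hilbert) : Prop :=
  exists d : nat -> H, forall (x : H) (eps : R), 0 < eps ->
    exists n : nat, hnorm H (minus x (d n)) < eps.

Definition hopen (H : Hilbert) (O : H -> Prop) : Prop :=
  forall x, O x -> exists eps, 0 < eps /\ forall y, hnorm H (minus y x) < eps -> O y.

Definition sigma_algebra2 (S : (R * R -> Prop) -> Prop) : Prop :=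
  S (fun _ => False) /\
  (forall A, S A -> S (fun p => ~ A p)) /\
  (forall A : nat -> R * R -> Prop, (forall n, S (A n)) -> S (fun p => exists n, A n p)).

Definition borel2 (A : R * R -> Prop) : Prop :=
  forall S, sigma_algebra2 S -> (forall O : R * R -> Prop, open O -> S O) -> S A.

Definition borel_fun (H : Hilbert) (g : R * R -> H) : Prop :=
  forall O : H -> Prop, hopen H O -> borel2 (fun p => O (g p)).

Definition sep_continuous (phi : R -> R -> R -> C) : Prop :=
  (forall t u s, continuous (fun s' => phi s' t u) s) /\
  (forall s u t, continuous (fun t' => phi s t' u) t) /\
  (forall s t u, continuous (fun u' => phi s t u') u).

(** Membership in (l^1_R (x)_h l^1_R (x)_h l^1_R)^*, via the stated
    identification with factorizable functions with bounded factors. *)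
Definition in_h3dual (phi : R -> R -> R -> C) : Prop :=
  exists (E F : Hilbert) (alpha : R -> E) (theta : R -> F -> E) (beta : R -> F),
    (forall t, Clinear F E (theta t)) /\
    (exists c, forall s, hnorm E (alpha s) <= c) /\
    (exists c, forall t (x : F), hnorm E (theta t x) <= c * hnorm F x) /\
    (exists c, forall u, hnorm F (beta u) <= c) /\
    (forall s t u, phi s t u = hinner E (alpha s) (theta t (beta u))).

(** A matrix [M m n] (m, n >= 0 indexing m, n >= 1) defines a bounded
    operator on l^2 of norm <= 1. *)
Definition l2_contraction (M : nat -> nat -> C) : Prop :=
  forall x : nat -> C, ex_series (fun n => (Cmod (x n))^2) ->
    exists y : nat -> C,
      (forall m, is_series (fun n => Cmult (M m n) (x n)) (y m)) /\
      ex_series (fun m => (Cmod (y m))^2) /\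
      Series (fun m => (Cmod (y m))^2) <= Series (fun n => (Cmod (x n))^2).

Definition C2R (h : R -> R) : Prop :=
  (forall x, ex_derive h x) /\
  (forall x, ex_derive (Derive h) x) /\
  (forall x, continuous (Derive (Derive h)) x).

Definition C2C (f : R -> C) : Prop :=
  C2R (fun x => Re (f x)) /\ C2R (fun x => Im (f x)).

Definition Cderive (g : R -> C) (x : R) : C :=
  (Derive (fun y => Re (g y)) x, Derive (fun y => Im (g y)) x).

Definition dd1 (f : R -> C) (x0 x1 : R) : C :=
  if Req_EM_T x0 x1 then Cderive f x0
  else Cdiv (Cminus (f x0) (f x1)) (RtoC (x0 - x1)).

Definition dd2 (f : R -> C) (x0 x1 x2 : R) : C :=
  if Req_EM_T x0 x1 then Cderive (fun x => dd1 f x x2) x1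
  else Cdiv (Cminus (dd1 f x0 x2) (dd1 f x1 x2)) (RtoC (x0 - x1)).

(* Main.v *)
Require Import Defs.
From Stdlib Require Import Reals.
From Coquelicot Require Import Coquelicot.
From Stdlib Require Import Lra Psatz ZArith Arith Cantor IndefiniteDescription FunctionalExtensionality ProofIrrelevance PropExtensionality Classical.
Open Scope R_scope.

Ltac cdestr := repeat match goal with c : C |- _ => destruct c end.
Ltac ceq := apply injective_projections; simpl; try field_simplify; try ring.

Section HilbertBasics.
Variable H : Hilbert.
Notation ip := (hinner H).
Notation nrm := (hnorm H).

Lemma ip_addr (x y z : H) : ip x (plus y z) = Cplus (ip x y) (ip x z).
Proof.
  rewrite hinner_sym, hinner_addl, Cplus_conj, <- !hinner_sym. reflexivity.
Qed.

Lemma ip_scalr (a : C) (x y : H) : ip x (scal a y) = Cmult (Cconj a) (ip x y).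
Proof.
  rewrite hinner_sym, hinner_scall, Cmult_conj, <- hinner_sym. reflexivity.
Qed.

Lemma ip_zero_l (y : H) : ip zero y = RtoC 0.
Proof.
  rewrite <- (scal_zero_l (K:=C_Ring) (zero : H)), hinner_scall.
  change (@zero C_Ring) with (RtoC 0). apply Cmult_0_l.
Qed.

Lemma ip_zero_r (y : H) : ip y zero = RtoC 0.
Proof. rewrite hinner_sym, ip_zero_l. ceq. Qed.

Lemma ip_opp_l (x y : H) : ip (opp x) y = Copp (ip x y).
Proof.
  rewrite <- (scal_opp_one (K:=C_Ring)), hinner_scall.
  change (@opp C_Ring (@one C_Ring)) with (Copp (RtoC 1)). ring.
Qed.

Lemma ip_opp_r (x y : H) : ip x (opp y) = Copp (ip x y).
Proof. rewrite hinner_sym, ip_opp_l, Copp_conj, <- hinner_sym. reflexivity. Qed.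

Lemma ip_minus_l (x y z : H) : ip (minus x y) z = Cminus (ip x z) (ip y z).
Proof. unfold minus. rewrite hinner_addl, ip_opp_l. reflexivity. Qed.

Lemma ip_minus_r (x y z : H) : ip z (minus x y) = Cminus (ip z x) (ip z y).
Proof. unfold minus. rewrite ip_addr, ip_opp_r. reflexivity. Qed.

Lemma ip_self_im (x : H) : Im (ip x x) = 0.
Proof.
  pose proof (hinner_sym H x x) as E.
  destruct (ip x x) as [p q] eqn:Q. unfold Cconj in E. simpl in E.
  injection E. simpl. lra.
Qed.

Lemma ip_self_real (x : H) : ip x x = RtoC (Re (ip x x)).
Proof.
  pose proof (ip_self_im x). destruct (ip x x) as [p q]. simpl in *. subst. reflexivity.
Qed.

Lemma nrm_ge0 (x : H) : 0 <= nrm x.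
Proof. apply sqrt_pos. Qed.

Lemma nrm_sq (x : H) : nrm x ^ 2 = Re (ip x x).
Proof. unfold hnorm. rewrite pow2_sqrt; auto. apply hinner_pos. Qed.

Lemma ip_self_nrm (x : H) : ip x x = RtoC (nrm x ^ 2).
Proof. rewrite nrm_sq. apply ip_self_real. Qed.

Lemma nrm_zero : nrm zero = 0.
Proof. unfold hnorm. rewrite ip_zero_l. simpl. apply sqrt_0. Qed.

Lemma nrm_eq0 (x : H) : nrm x = 0 -> x = zero.
Proof.
  intro E. apply hinner_def. rewrite ip_self_nrm, E. ceq.
Qed.

Lemma nrm_scal (a : C) (x : H) : nrm (scal a x) = Cmod a * nrm x.
Proof.
  unfold hnorm. rewrite hinner_scall, ip_scalr.
  rewrite (ip_self_real x). unfold Cmod.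
  rewrite <- sqrt_mult_alt.
  - f_equal. destruct a as [p q]. simpl. ring.
  - nra.
Qed.

Lemma nrm_opp (x : H) : nrm (opp x) = nrm x.
Proof.
  rewrite <- (scal_opp_one (K:=C_Ring)), nrm_scal.
  change (@opp C_Ring (@one C_Ring)) with (Copp (RtoC 1)).
  rewrite Cmod_opp, Cmod_1. ring.
Qed.

Lemma nrm_minus_sym (x y : H) : nrm (minus x y) = nrm (minus y x).
Proof.
  rewrite <- nrm_opp. f_equal. apply opp_minus.
Qed.

Lemma ip_expand (x y : H) :
  ip (plus x y) (plus x y) = Cplus (Cplus (ip x x) (ip y y)) (Cplus (ip x y) (ip y x)).
Proof. rewrite !hinner_addl, !ip_addr. ring. Qed.

Lemma Cauchy_Schwarz (x y : H) : Cmod (ip x y) <= nrm x * nrm y.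
Proof.
  destruct (Req_dec (nrm y) 0) as [Hy|Hy].
  { apply nrm_eq0 in Hy. subst. rewrite ip_zero_r, Cmod_0, nrm_zero. lra. }
  pose proof (nrm_ge0 y) as Hy0.
  set (N := nrm y ^ 2).
  assert (HN : 0 < N) by (unfold N; nra).
  set (lam := Cmult (ip x y) (RtoC (/ N))).
  pose proof (hinner_pos H (minus x (scal lam y))) as P.
  rewrite ip_minus_l, !ip_minus_r, !hinner_scall, !ip_scalr in P.
  rewrite (hinner_sym H x y) in P.
  rewrite (ip_self_nrm y) in P. rewrite (ip_self_nrm x) in P.
  fold N in P. unfold lam in P.
  destruct (ip x y) as [p q]. simpl in P.
  assert (Hm : Cmod (p, q) ^ 2 = p^2 + q^2) by (rewrite Cmod2_alt; reflexivity).
  assert (P' : 0 <= nrm x ^ 2 - (p^2 + q^2) / N).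
  { field_simplify in P; [| lra].
    replace (nrm x ^ 2 - (p ^ 2 + q ^ 2) / N) with ((nrm x ^ 2 * N - p ^ 2 - q ^ 2) * / N) by (field; lra).
    exact P. }
  apply Rsqr_incr_0_var.
  - unfold Rsqr.
    replace (nrm x * nrm y * (nrm x * nrm y)) with (nrm x ^ 2 * N) by (unfold N; ring).
    replace (Cmod (p, q) * Cmod (p, q)) with (p^2+q^2) by (rewrite <- Hm; ring).
    apply Rmult_le_reg_r with (/ N). apply Rinv_0_lt_compat; lra.
    replace (nrm x ^ 2 * N * / N) with (nrm x ^ 2) by (field; lra). unfold Rdiv in P'. lra.
  - apply Rmult_le_pos; apply nrm_ge0.
Qed.

End HilbertBasics.

Section HB2.
Variable H : Hilbert.
Notation ip := (hinner H).
Notation nrm := (hnorm H).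
Notation HG := (ModuleSpace.AbelianGroup C_Ring (hcar H)).

Lemma Hscal1 (x : H) : scal (RtoC 1) x = x.
Proof. exact (scal_one x). Qed.
Lemma Hscal_assoc (a b : C) (x : H) : scal a (scal b x) = scal (Cmult a b) x.
Proof. exact (scal_assoc a b x). Qed.
Lemma Hscal_distr_r (a b : C) (x : H) : scal (Cplus a b) x = plus (scal a x) (scal b x).
Proof. exact (scal_distr_r a b x). Qed.
Lemma Hscal_distr_l (a : C) (x y : H) : scal a (plus x y) = plus (scal a x) (scal a y).
Proof. exact (scal_distr_l a x y). Qed.
Lemma Hscal_minus_l (a : C) (x y : H) : scal a (minus x y) = minus (scal a x) (scal a y).
Proof. exact (scal_minus_distr_l a x y). Qed.
Lemma Hplus_assoc (x y z : H) : plus x (plus y z) = plus (plus x y) z.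
Proof. exact (plus_assoc x y z). Qed.
Lemma Hplus_comm (x y : H) : plus x y = plus y x.
Proof. exact (plus_comm x y). Qed.
Lemma Hminus_pp (x y a b : H) : plus (minus x a) (minus y b) = minus (plus x y) (plus a b).
Proof.
  unfold minus. rewrite (opp_plus (G:=HG)).
  rewrite <- !(plus_assoc (G:=HG)). f_equal.
  rewrite !(plus_assoc (G:=HG)). rewrite ((plus_comm (G:=HG)) (opp a) y). reflexivity.
Qed.

Lemma Hminus_mm (x a b : H) : minus (minus x a) (minus x b) = minus b a.
Proof.
  unfold minus. rewrite (opp_plus (G:=HG)), (opp_opp (G:=HG)).
  rewrite <- !(plus_assoc (G:=HG)). rewrite ((plus_comm (G:=HG)) (opp a)).
  rewrite !(plus_assoc (G:=HG)). rewrite (plus_opp_r (G:=HG)), (plus_zero_l (G:=HG)).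
  reflexivity.
Qed.

Lemma Re_le_Cmod (c : C) : Re c <= Cmod c.
Proof. pose proof (re_le_Cmod c). pose proof (Rle_abs (Re c)). lra. Qed.

Lemma nrm_plus_sq (x y : H) :
  nrm (plus x y) ^ 2 = nrm x ^ 2 + nrm y ^ 2 + 2 * Re (ip x y).
Proof.
  rewrite !nrm_sq, ip_expand, (hinner_sym H x y).
  destruct (ip x y) as [p q]. unfold Re; simpl. ring.
Qed.

Lemma nrm_minus_sq (x y : H) :
  nrm (minus x y) ^ 2 = nrm x ^ 2 + nrm y ^ 2 - 2 * Re (ip x y).
Proof.
  unfold minus. rewrite nrm_plus_sq, nrm_opp, ip_opp_r.
  destruct (ip x y) as [p q]. unfold Re; simpl. ring.
Qed.

Lemma nrm_triangle (x y : H) : nrm (plus x y) <= nrm x + nrm y.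
Proof.
  apply Rsqr_incr_0_var.
  - unfold Rsqr. pose proof (nrm_plus_sq x y).
    pose proof (Re_le_Cmod (ip x y)). pose proof (Cauchy_Schwarz H x y). nra.
  - pose proof (nrm_ge0 H x); pose proof (nrm_ge0 H y); lra.
Qed.

Lemma nrm_tri3 (x y z : H) : nrm (minus x z) <= nrm (minus x y) + nrm (minus y z).
Proof. rewrite (minus_trans y x z). apply nrm_triangle. Qed.

Lemma parallelogram (x y : H) :
  nrm (plus x y) ^ 2 + nrm (minus x y) ^ 2 = 2 * nrm x ^ 2 + 2 * nrm y ^ 2.
Proof. rewrite nrm_plus_sq, nrm_minus_sq. ring. Qed.

Lemma Cmod_ip_le (x y : H) (c : R) : nrm x <= c -> Cmod (ip x y) <= c * nrm y.
Proof.
  intro. pose proof (Cauchy_Schwarz H x y). pose proof (nrm_ge0 H y). nra.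
Qed.

Lemma ip_diff_l (x x' y : H) :
  Cmod (Cminus (ip x y) (ip x' y)) <= nrm (minus x x') * nrm y.
Proof. rewrite <- ip_minus_l. apply Cauchy_Schwarz. Qed.

Lemma ip_diff_r (x y y' : H) :
  Cmod (Cminus (ip x y) (ip x y')) <= nrm x * nrm (minus y y').
Proof. rewrite <- ip_minus_r. apply Cauchy_Schwarz. Qed.

Lemma minus_plus_r (x l w : H) : minus x (plus l w) = minus (minus x l) w.
Proof. unfold minus. rewrite (opp_plus (G:=HG)), (plus_assoc (G:=HG)). reflexivity. Qed.

Definition subspace (M : H -> Prop) : Prop :=
  M zero /\ (forall x y, M x -> M y -> M (plus x y)) /\
  (forall (a : C) x, M x -> M (scal a x)).

Definition closedP (M : H -> Prop) : Prop :=
  forall x, (forall eps, 0 < eps -> exists m, M m /\ nrm (minus x m) < eps) -> M x.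

Definition cspan (V : H -> Prop) (x : H) : Prop :=
  forall M, subspace M -> closedP M -> (forall v, V v -> M v) -> M x.

Lemma sub_opp M : subspace M -> forall x, M x -> M (opp x).
Proof.
  intros [H0 [Hp Hs]] x Hx. rewrite <- (scal_opp_one (K:=C_Ring)). apply Hs; auto.
Qed.

Lemma sub_minus M : subspace M -> forall x y, M x -> M y -> M (minus x y).
Proof.
  intros HM x y Hx Hy. destruct HM as [H0 [Hp Hs]]. apply Hp; auto.
  apply sub_opp; auto. split; auto.
Qed.

Lemma cspan_subspace V : subspace (cspan V).
Proof.
  split; [|split].
  - intros M [H0 _] _ _. auto.
  - intros x y Hx Hy M HM HC HV. destruct HM as [H0 [Hp Hs]].
    apply Hp; [apply Hx|apply Hy]; auto; split; auto.
  - intros a x Hx M HM HC HV. destruct HM as [H0 [Hp Hs]].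
    apply Hs; apply Hx; auto; split; auto.
Qed.

Lemma cspan_closed V : closedP (cspan V).
Proof.
  intros x Hx M HM HC HV. apply HC. intros eps Heps.
  destruct (Hx eps Heps) as [m [Hm Hd]]. exists m. split; auto.
  apply Hm; auto.
Qed.

Lemma cspan_incl V : forall v, V v -> cspan V v.
Proof. intros v Hv M _ _ HV. auto. Qed.

Lemma cspan_min V M : subspace M -> closedP M -> (forall v, V v -> M v) ->
  forall x, cspan V x -> M x.
Proof. intros. apply H3; auto. Qed.

Lemma proj_exists (M : H -> Prop) : subspace M -> closedP M ->
  forall x, exists p, M p /\ forall m, M m -> ip (minus x p) m = RtoC 0.
Proof.
  intros HM HC x.
  set (E := fun r => exists m, M m /\ r = - nrm (minus x m)).
  assert (Hb : bound E).
  { exists 0. intros r [m [_ ->]]. pose proof (nrm_ge0 H (minus x m)). lra. }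
  assert (Hne : exists r, E r).
  { exists (- nrm (minus x zero)). exists zero. split; auto. apply HM. }
  destruct (completeness E Hb Hne) as [L HL].
  set (d := - L).
  assert (Hd : forall m, M m -> d <= nrm (minus x m)).
  { intros m Hm. unfold d. destruct HL as [HL1 _].
    assert (E (- nrm (minus x m))) by (exists m; auto). apply HL1 in H0. lra. }
  assert (Hd0 : 0 <= d).
  { unfold d. destruct HL as [_ HL2]. destruct Hne as [r Hr].
    enough (L <= 0) by lra. apply HL2. intros r' [m [_ ->]].
    pose proof (nrm_ge0 H (minus x m)). lra. }
  assert (Happ : forall k : nat, exists m, M m /\ nrm (minus x m) < d + / INR (S k)).
  { intro k. assert (Hpos : 0 < / INR (S k)) by (apply Rinv_0_lt_compat, lt_0_INR; lia).
    destruct (Classical_Prop.classic (exists m, M m /\ nrm (minus x m) < d + / INR (S k))) as [Y|N]; auto.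
    exfalso. destruct HL as [_ HL2].
    assert (L <= - (d + / INR (S k))).
    { apply HL2. intros r [m [Hm ->]].
      destruct (Rlt_le_dec (nrm (minus x m)) (d + / INR (S k))) as [Hl|Hl].
      - exfalso; apply N; eauto.
      - lra. }
    unfold d in H0. lra. }
  set (mk := fun k => proj1_sig (constructive_indefinite_description _ (Happ k))).
  assert (Hmk : forall k, M (mk k) /\ nrm (minus x (mk k)) < d + / INR (S k)).
  { intro k. unfold mk. destruct (constructive_indefinite_description _ (Happ k)). auto. }
  assert (Hhalf : forall j k, 2 * d <= nrm (plus (minus x (mk j)) (minus x (mk k)))).
  { intros j k.
    assert (Mmid : M (scal (RtoC (/2)) (plus (mk j) (mk k)))).
    { apply HM. apply HM; apply Hmk. }
    pose proof (Hd _ Mmid) as Hm.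
    assert (plus (minus x (mk j)) (minus x (mk k)) =
            scal (RtoC 2) (minus x (scal (RtoC (/2)) (plus (mk j) (mk k))))) as Eq.
    { rewrite Hscal_minus_l, Hscal_assoc.
      rewrite <- RtoC_mult, Rinv_r by lra. rewrite Hscal1.
      replace (RtoC 2) with (Cplus (RtoC 1) (RtoC 1)) by (apply injective_projections; simpl; ring).
      rewrite Hscal_distr_r, Hscal1. apply Hminus_pp. }
    rewrite Eq, nrm_scal, Cmod_R, Rabs_pos_eq by lra. lra. }
  assert (Hcau : forall eps, 0 < eps -> exists N : nat, forall m n, (N <= m)%nat -> (N <= n)%nat ->
          sqrt (Re (ip (minus (mk m) (mk n)) (minus (mk m) (mk n)))) < eps).
  { intros eps Heps.
    set (del := Rmin 1 (eps ^ 2 / (8 * (2 * d + 1)))).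
    assert (Hdel : 0 < del) by (unfold del; apply Rmin_pos; [lra| apply Rdiv_lt_0_compat; nra]).
    destruct (archimed (/ del)) as [Ha _].
    assert (Hup : (0 <= up (/ del))%Z).
    { apply le_IZR. pose proof (Rinv_0_lt_compat _ Hdel). lra. }
    exists (Z.to_nat (up (/ del))). intros m n Hm Hn.
    assert (Hsm : forall k, (Z.to_nat (up (/ del)) <= k)%nat -> / INR (S k) < del).
    { intros k Hk. rewrite <- (Rinv_inv del). apply Rinv_lt_contravar.
      - apply Rmult_lt_0_compat. apply Rinv_0_lt_compat; auto. apply lt_0_INR; lia.
      - apply Rlt_le_trans with (IZR (up (/ del))); auto.
        rewrite <- (Z2Nat.id _ Hup), <- INR_IZR_INZ. apply le_INR. lia. }
    fold (hnorm H (minus (mk m) (mk n))).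
    pose proof (parallelogram (minus x (mk n)) (minus x (mk m))) as P.
    replace (minus (minus x (mk n)) (minus x (mk m))) with (minus (mk m) (mk n)) in P.
    2:{ symmetry; apply Hminus_mm. }
    assert (P' : nrm (plus (minus x (mk n)) (minus x (mk m))) ^ 2 + nrm (minus (mk m) (mk n)) ^ 2 =
      2 * nrm (minus x (mk n)) ^ 2 + 2 * nrm (minus x (mk m)) ^ 2) by exact P. clear P.
    pose proof (Hhalf n m). pose proof (Hmk m) as [_ Am]. pose proof (Hmk n) as [_ An].
    pose proof (Hsm m Hm). pose proof (Hsm n Hn).
    pose proof (Hd _ (proj1 (Hmk m))). pose proof (Hd _ (proj1 (Hmk n))).
    assert (del <= 1) by apply Rmin_l.
    assert (del <= eps ^ 2 / (8 * (2 * d + 1))) by apply Rmin_r.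
    assert (nrm (minus x (mk m)) ^ 2 <= d^2 + del * (2*d+1)) by nra.
    assert (nrm (minus x (mk n)) ^ 2 <= d^2 + del * (2*d+1)) by nra.
    assert (4 * d^2 <= nrm (plus (minus x (mk n)) (minus x (mk m))) ^ 2) by nra.
    assert (del * (2 * d + 1) <= eps ^ 2 / 8).
    { apply Rmult_le_reg_r with (/ (2*d+1)). apply Rinv_0_lt_compat; lra.
      replace (del * (2 * d + 1) * / (2 * d + 1)) with del by (field; lra).
      replace (eps ^ 2 / 8 * / (2 * d + 1)) with (eps ^ 2 / (8 * (2 * d + 1))) by (field; lra). lra. }
    assert (Heps2 : 0 < eps ^ 2) by (apply pow_lt; lra).
    assert (Hsq : nrm (minus (mk m) (mk n)) ^ 2 < eps ^ 2).
    { set (dl := del * (2 * d + 1)) in *. set (d2 := d ^ 2) in *.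
      set (X := nrm (minus (mk m) (mk n)) ^ 2) in *.
      set (A := nrm (plus (minus x (mk n)) (minus x (mk m))) ^ 2) in *.
      set (Bm := nrm (minus x (mk m)) ^ 2) in *. set (Bn := nrm (minus x (mk n)) ^ 2) in *.
      lra. }
    pose proof (nrm_ge0 H (minus (mk m) (mk n))). nra. }
  destruct (hcomplete H mk Hcau) as [l Hl].
  assert (Hconv : forall eps, 0 < eps -> exists N, forall n, (N <= n)%nat -> nrm (minus l (mk n)) < eps).
  { intros eps He. destruct (Hl eps He) as [N HN]. exists N. intros n Hn.
    rewrite nrm_minus_sym. apply HN; auto. }
  assert (Ml : M l).
  { apply HC. intros eps He. destruct (Hconv eps He) as [N HN]. exists (mk N). split.
    apply Hmk. apply HN. lia. }
  assert (Hmin : forall m, M m -> nrm (minus x l) <= nrm (minus x m)).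
  { intros m Hm. pose proof (Hd m Hm).
    apply Rnot_lt_le. intro Hlt.
    set (g := nrm (minus x l) - d).
    assert (Hg : 0 < g) by (unfold g; lra).
    destruct (Hconv (g/2)) as [N1 HN1]. lra.
    destruct (archimed (2 / g)) as [Ha _].
    assert (Hup : (0 <= up (2 / g))%Z).
    { apply le_IZR. assert (0 < 2 / g) by (apply Rdiv_lt_0_compat; lra). lra. }
    set (k := Nat.max N1 (Z.to_nat (up (2 / g)))).
    assert (Hk : / INR (S k) < g / 2).
    { rewrite <- (Rinv_inv (g/2)). apply Rinv_lt_contravar.
      - apply Rmult_lt_0_compat. apply Rinv_0_lt_compat; lra. apply lt_0_INR; lia.
      - replace (/ (g/2)) with (2/g) by (field; lra).
        apply Rlt_le_trans with (IZR (up (2/g))); auto.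
        rewrite <- (Z2Nat.id _ Hup), <- INR_IZR_INZ. apply le_INR. unfold k. lia. }
    pose proof (HN1 k ltac:(unfold k; lia)). pose proof (Hmk k) as [_ Hk2].
    pose proof (nrm_tri3 x (mk k) l) as T3. rewrite (nrm_minus_sym H (mk k) l) in T3.
    unfold g in *. lra. }
  exists l. split; auto.
  intros m Hm.
  set (z := minus x l). set (c := ip z m).
  set (r := / (nrm m ^ 2 + 1)).
  assert (Hr : 0 < r) by (unfold r; apply Rinv_0_lt_compat; pose proof (pow2_ge_0 (nrm m)); lra).
  assert (Hrm : r * nrm m ^ 2 < 1).
  { unfold r. pose proof (pow2_ge_0 (nrm m)). apply Rmult_lt_reg_r with (nrm m ^ 2 + 1); [lra|].
    replace (/ (nrm m ^ 2 + 1) * nrm m ^ 2 * (nrm m ^ 2 + 1)) with (nrm m ^ 2) by (field; lra). lra. }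
  set (lam := Cmult (RtoC r) c).
  assert (Ml2 : M (plus l (scal lam m))) by (apply HM; auto; apply HM; auto).
  pose proof (Hmin _ Ml2) as Hm2.
  rewrite minus_plus_r in Hm2. fold z in Hm2.
  assert (Sq : nrm z ^ 2 <= nrm (minus z (scal lam m)) ^ 2).
  { pose proof (nrm_ge0 H z). apply pow_incr; auto. }
  rewrite nrm_minus_sq, nrm_scal, ip_scalr in Sq. fold c in Sq.
  unfold lam in Sq. rewrite Cmod_mult, Cmod_R, Rabs_pos_eq in Sq by lra.
  destruct c as [p q] eqn:Ec. simpl in Sq.
  set (K := Cmod (p, q)) in *. set (nm := nrm m) in *.
  assert (Cm : K ^ 2 = p ^ 2 + q ^ 2) by (unfold K; rewrite Cmod2_alt; reflexivity).
  assert (Sq2 : 0 <= r * (p^2+q^2) * (r * nm ^ 2 - 2)).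
  { replace (r * (p^2+q^2) * (r * nm ^ 2 - 2)) with ((r * K * nm) ^ 2 - 2 * r * (p^2+q^2))
      by (rewrite <- Cm; ring).
    lra. }
  assert (0 <= p^2+q^2) by nra.
  assert (Hpq : p ^ 2 + q ^ 2 <= 0).
  { assert (0 < r * (2 - r * nm ^ 2)) by (apply Rmult_lt_0_compat; lra). nra. }
  apply injective_projections; simpl; nra.
Qed.

End HB2.

(** * continuity and limits for C-valued functions *)

Lemma Cmod_minus_sym (a b : C) : Cmod (Cminus a b) = Cmod (Cminus b a).
Proof. replace (Cminus a b) with (Copp (Cminus b a)) by ring. apply Cmod_opp. Qed.

Lemma Cmod_tri3 (a b c : C) : Cmod (Cminus a c) <= Cmod (Cminus a b) + Cmod (Cminus b c).
Proof. replace (Cminus a c) with (Cplus (Cminus a b) (Cminus b c)) by ring. apply Cmod_triangle. Qed.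

Lemma cont_C_eps (f : R -> C) (x : R) :
  continuous f x <->
  (forall eps, 0 < eps -> exists del, 0 < del /\ forall y, Rabs (y - x) < del -> Cmod (Cminus (f y) (f x)) < eps).
Proof.
  split.
  - intros Hc eps He.
    assert (He' : 0 < eps / sqrt 2) by (apply Rdiv_lt_0_compat; [lra| apply sqrt_lt_R0; lra]).
    destruct (proj1 (filterlim_locally f (f x)) Hc (mkposreal _ He')) as [del Hd].
    exists del. split. apply cond_pos. intros y Hy.
    assert (B : ball x del y) by exact Hy.
    apply Hd in B. apply C_NormedModule_mixin_compat2 in B. simpl in B.
    replace (sqrt 2 * (eps / sqrt 2)) with eps in B by (field; apply Rgt_not_eq, sqrt_lt_R0; lra).
    exact B.
  - intros Hd. apply filterlim_locally. intro eps.
    destruct (Hd eps (cond_pos eps)) as [del [Hdel Hy]].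
    exists (mkposreal _ Hdel). intros y By. apply C_NormedModule_mixin_compat1.
    apply Hy. exact By.
Qed.

Lemma cont_C_conj (f : R -> C) x : continuous f x -> continuous (fun y => Cconj (f y)) x.
Proof.
  rewrite !cont_C_eps. intros Hc eps He. destruct (Hc eps He) as [d [Hd Hy]].
  exists d. split; auto. intros y Hyd. rewrite <- Cminus_conj, Cmod_conj. auto.
Qed.

Lemma cont_C_plus (f g : R -> C) x : continuous f x -> continuous g x ->
  continuous (fun y => Cplus (f y) (g y)) x.
Proof.
  rewrite !cont_C_eps. intros Hf Hg eps He.
  destruct (Hf (eps/2)) as [d1 [Hd1 H1]]. lra.
  destruct (Hg (eps/2)) as [d2 [Hd2 H2]]. lra.
  exists (Rmin d1 d2). split. apply Rmin_pos; auto.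
  intros y Hy.
  assert (Y1 : Rabs (y - x) < d1) by (pose proof (Rmin_l d1 d2); lra).
  assert (Y2 : Rabs (y - x) < d2) by (pose proof (Rmin_r d1 d2); lra).
  specialize (H1 y Y1). specialize (H2 y Y2).
  replace (Cminus (Cplus (f y) (g y)) (Cplus (f x) (g x)))
    with (Cplus (Cminus (f y) (f x)) (Cminus (g y) (g x))) by ring.
  eapply Rle_lt_trans. apply Cmod_triangle. lra.
Qed.

Lemma cont_C_mult (f g : R -> C) x : continuous f x -> continuous g x ->
  continuous (fun y => Cmult (f y) (g y)) x.
Proof.
  rewrite !cont_C_eps. intros Hf Hg eps He.
  set (A := Cmod (f x) + 1). set (B := Cmod (g x) + 1).
  assert (HA : 0 < A) by (unfold A; pose proof (Cmod_ge_0 (f x)); lra).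
  assert (HB : 0 < B) by (unfold B; pose proof (Cmod_ge_0 (g x)); lra).
  destruct (Hf (Rmin 1 (eps / (2 * B)))) as [d1 [Hd1 H1]].
  { apply Rmin_pos; [lra| apply Rdiv_lt_0_compat; lra]. }
  destruct (Hg (eps / (2 * A))) as [d2 [Hd2 H2]].
  { apply Rdiv_lt_0_compat; lra. }
  exists (Rmin d1 d2). split. apply Rmin_pos; auto.
  intros y Hy.
  assert (Y1 : Rabs (y - x) < d1) by (pose proof (Rmin_l d1 d2); lra).
  assert (Y2 : Rabs (y - x) < d2) by (pose proof (Rmin_r d1 d2); lra).
  specialize (H1 y Y1). specialize (H2 y Y2).
  pose proof (Rmin_l 1 (eps / (2 * B))). pose proof (Rmin_r 1 (eps / (2 * B))).
  replace (Cminus (Cmult (f y) (g y)) (Cmult (f x) (g x)))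
    with (Cplus (Cmult (f y) (Cminus (g y) (g x))) (Cmult (Cminus (f y) (f x)) (g x))) by ring.
  eapply Rle_lt_trans. apply Cmod_triangle. rewrite !Cmod_mult.
  assert (Fy : Cmod (f y) <= A).
  { unfold A. replace (f y) with (Cplus (f x) (Cminus (f y) (f x))) by ring.
    pose proof (Cmod_triangle (f x) (Cminus (f y) (f x))). lra. }
  assert (T1 : Cmod (f y) * Cmod (Cminus (g y) (g x)) <= A * (eps / (2 * A))).
  { apply Rmult_le_compat; try apply Cmod_ge_0; lra. }
  assert (T2 : Cmod (Cminus (f y) (f x)) * Cmod (g x) < (eps / (2 * B)) * B).
  { unfold B. pose proof (Cmod_ge_0 (g x)). pose proof (Cmod_ge_0 (Cminus (f y) (f x))).
    apply Rle_lt_trans with ((eps / (2 * B)) * Cmod (g x)).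
    apply Rmult_le_compat_r; lra. apply Rmult_lt_compat_l. apply Rdiv_lt_0_compat; lra. unfold B; lra. }
  replace (A * (eps / (2 * A))) with (eps / 2) in T1 by (field; lra).
  replace (eps / (2 * B) * B) with (eps / 2) in T2 by (field; lra). lra.
Qed.

Lemma cont_C_const (c : C) x : continuous (fun _ : R => c) x.
Proof. apply continuous_const. Qed.

Lemma cont_C_ext (f g : R -> C) x : (forall y, f y = g y) -> continuous f x -> continuous g x.
Proof. intros. eapply continuous_ext; eauto. Qed.

Lemma is_series_C_eps (a : nat -> C) (l : C) :
  (forall eps, 0 < eps -> exists N, forall n, (N <= n)%nat -> Cmod (Cminus (sum_n a n) l) < eps) ->
  is_series a l.
Proof.
  intros Hd. unfold is_series. apply filterlim_locally. intro eps.
  destruct (Hd eps (cond_pos eps)) as [N HN]. exists N. intros n Hn.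
  apply C_NormedModule_mixin_compat1. apply HN; auto.
Qed.

Definition dense_seq (d : nat -> R) : Prop :=
  forall x eps, 0 < eps -> exists k, Rabs (d k - x) < eps.

Lemma dense_zero (d : nat -> R) (g : R -> C) :
  dense_seq d -> (forall x, continuous g x) -> (forall k, g (d k) = RtoC 0) ->
  forall x, g x = RtoC 0.
Proof.
  intros Hd Hc Hz x. apply Cmod_eq_0.
  apply Rle_antisym; [|apply Cmod_ge_0].
  apply Rnot_lt_le. intro Hp.
  destruct (proj1 (cont_C_eps g x) (Hc x) _ Hp) as [del [Hdel Hy]].
  destruct (Hd x del Hdel) as [k Hk]. specialize (Hy _ Hk). rewrite Hz in Hy.
  replace (Cminus (RtoC 0) (g x)) with (Copp (g x)) in Hy by ring. rewrite Cmod_opp in Hy. lra.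
Qed.

Section HB3.
Variable H : Hilbert.
Notation ip := (hinner H).
Notation nrm := (hnorm H).
Notation HG := (ModuleSpace.AbelianGroup C_Ring (hcar H)).

Lemma Hplus_minus (p x : H) : plus p (minus x p) = x.
Proof.
  unfold minus. rewrite ((plus_comm (G:=HG)) x), (plus_assoc (G:=HG)), (plus_opp_r (G:=HG)).
  apply (plus_zero_l (G:=HG)).
Qed.

Lemma Hminus_eq0 (x : H) : minus x x = zero.
Proof. apply (minus_eq_zero (G:=HG)). Qed.

Lemma ip_perp_minus (x p m : H) : ip (minus x p) m = RtoC 0 -> ip p m = ip x m.
Proof. rewrite ip_minus_l. intro E. apply Ceq_minus in E. auto. Qed.

Lemma proj_nrm (x p : H) : ip (minus x p) p = RtoC 0 -> nrm p <= nrm x.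
Proof.
  intro E.
  assert (Hs : nrm x ^ 2 = nrm p ^ 2 + nrm (minus x p) ^ 2).
  { rewrite <- (Hplus_minus p x) at 1. rewrite nrm_plus_sq, (hinner_sym H (minus x p) p), E.
    simpl. ring. }
  apply Rsqr_incr_0_var. unfold Rsqr. pose proof (pow2_ge_0 (nrm (minus x p))). nra.
  apply nrm_ge0.
Qed.

Lemma proj_exists2 (M : H -> Prop) : subspace H M -> closedP H M ->
  forall x, exists p, M p /\ (forall m, M m -> ip p m = ip x m) /\ nrm p <= nrm x /\
    (forall m, M m -> ip (minus x p) m = RtoC 0).
Proof.
  intros HM HC x. destruct (proj_exists H M HM HC x) as [p [Mp Hp]].
  exists p. repeat split; auto.
  - intros m Mm. apply ip_perp_minus, Hp, Mm.
  - apply proj_nrm, Hp, Mp.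
Qed.

Lemma riesz (l : H -> C) (c : R) :
  (forall x y, l (plus x y) = Cplus (l x) (l y)) ->
  (forall a x, l (scal a x) = Cmult a (l x)) ->
  (forall x, Cmod (l x) <= c * nrm x) ->
  exists w, forall f, ip f w = l f.
Proof.
  intros Ladd Lsc Lb.
  assert (L0 : l zero = RtoC 0).
  { rewrite <- (scal_zero_l (K:=C_Ring) (zero : H)), Lsc. apply Cmult_0_l. }
  assert (Lminus : forall x y, l (minus x y) = Cminus (l x) (l y)).
  { intros x y. unfold minus. rewrite Ladd. rewrite <- (scal_opp_one (K:=C_Ring)), Lsc.
    change (@opp C_Ring (@one C_Ring)) with (Copp (RtoC 1)). ring. }
  set (K := fun f => l f = RtoC 0).
  assert (HK : subspace H K).
  { split; [|split]; unfold K.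
    - auto.
    - intros x y Hx Hy. rewrite Ladd, Hx, Hy. ring.
    - intros a x Hx. rewrite Lsc, Hx. ring. }
  assert (CK : closedP H K).
  { intros x Hx. unfold K. apply Cmod_eq_0. apply Rle_antisym; [|apply Cmod_ge_0].
    apply Rnot_lt_le. intro Hp.
    set (c' := Rabs c + 1).
    assert (Hc' : 0 < c') by (unfold c'; pose proof (Rabs_pos c); lra).
    destruct (Hx (Cmod (l x) / c')) as [m [Km Hm]]. apply Rdiv_lt_0_compat; lra.
    pose proof (Lb (minus x m)) as B. rewrite Lminus, Km in B.
    replace (Cminus (l x) (RtoC 0)) with (l x) in B by ring.
    assert (c * nrm (minus x m) <= c' * nrm (minus x m)).
    { apply Rmult_le_compat_r. apply nrm_ge0. unfold c'. pose proof (Rle_abs c). lra. }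
    assert (c' * nrm (minus x m) < Cmod (l x)).
    { apply Rmult_lt_reg_l with (/ c'). apply Rinv_0_lt_compat; lra.
      rewrite <- Rmult_assoc, Rinv_l, Rmult_1_l by lra. unfold Rdiv in Hm. lra. }
    lra. }
  destruct (Classical_Prop.classic (forall f, l f = RtoC 0)) as [Z|NZ].
  { exists zero. intro f. rewrite Z. apply ip_zero_r. }
  apply Classical_Pred_Type.not_all_ex_not in NZ. destruct NZ as [f0 Hf0].
  destruct (proj_exists2 K HK CK f0) as [p [Kp [_ [_ Hperp]]]].
  set (z := minus f0 p).
  assert (Lz : l z <> RtoC 0).
  { unfold z. rewrite Lminus. unfold K in Kp. rewrite Kp.
    replace (Cminus (l f0) (RtoC 0)) with (l f0) by ring. auto. }
  assert (Nz : 0 < nrm z).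
  { destruct (nrm_ge0 H z) as [P|P]; auto. symmetry in P. apply nrm_eq0 in P.
    exfalso. apply Lz. rewrite P. auto. }
  set (N := nrm z ^ 2).
  assert (HN : 0 < N) by (unfold N; nra).
  exists (scal (Cmult (Cconj (l z)) (RtoC (/ N))) z).
  intro f.
  set (g := minus f (scal (Cdiv (l f) (l z)) z)).
  assert (Kg : K g).
  { unfold K, g. rewrite Lminus, Lsc. field. auto. }
  pose proof (Hperp g Kg) as Pg.
  assert (Pg' : ip g z = RtoC 0).
  { rewrite hinner_sym. fold z in Pg. rewrite Pg. apply injective_projections; simpl; ring. }
  unfold g in Pg'. rewrite ip_minus_l, hinner_scall in Pg'. apply Ceq_minus in Pg'.
  rewrite ip_scalr, Pg', (ip_self_nrm H z). fold N.
  rewrite Cmult_conj, Cconj_conj.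
  replace (Cconj (RtoC (/ N))) with (RtoC (/ N)) by (apply injective_projections; simpl; ring).
  rewrite (RtoC_inv N) by lra.
  field. split; auto. intro E. apply RtoC_inj in E. lra.
Qed.

Lemma wc_closed (L : R -> H -> C) (c : R) :
  (forall t x y, L t (plus x y) = Cplus (L t x) (L t y)) ->
  (forall a x, exists k, forall t, L t (scal a x) = Cmult k (L t x)) ->
  (forall t x, Cmod (L t x) <= c * nrm x) ->
  subspace H (fun x => forall t, continuous (fun t => L t x) t) /\
  closedP H (fun x => forall t, continuous (fun t => L t x) t).
Proof.
  intros Ladd Lsc Lb.
  assert (L0 : forall t, L t zero = RtoC 0).
  { intro t. pose proof (Lb t zero) as B. rewrite nrm_zero, Rmult_0_r in B.
    apply Cmod_eq_0. pose proof (Cmod_ge_0 (L t zero)). lra. }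
  split; [split; [|split]|].
  - intros t. eapply cont_C_ext. 2: apply (cont_C_const (RtoC 0)). intro. simpl. rewrite L0. auto.
  - intros x y Hx Hy t. eapply cont_C_ext.
    2: apply (cont_C_plus (fun t => L t x) (fun t => L t y)); auto.
    intro. simpl. rewrite Ladd. auto.
  - intros a x Hx t. destruct (Lsc a x) as [k Hk]. eapply cont_C_ext.
    2: apply (cont_C_mult (fun _ => k) (fun t => L t x)); [apply cont_C_const| auto].
    intro. simpl. rewrite Hk. auto.
  - intros x Hx t. apply cont_C_eps. intros eps He.
    set (c' := Rabs c + 1).
    assert (Hc' : 0 < c') by (unfold c'; pose proof (Rabs_pos c); lra).
    destruct (Hx (eps / 3 / c')) as [m [Hm Hxm]]. apply Rdiv_lt_0_compat; lra.
    destruct (proj1 (cont_C_eps _ t) (Hm t) (eps / 3)) as [del [Hdel Hy]]. lra.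
    exists del. split; auto. intros y Hyd.
    assert (Bd : forall s, Cmod (Cminus (L s x) (L s m)) < eps / 3).
    { intro s. assert (Cminus (L s x) (L s m) = L s (minus x m)).
      { unfold minus. rewrite Ladd. rewrite <- (scal_opp_one (K:=C_Ring)).
        destruct (Lsc (opp one) m) as [k Hk]. rewrite Hk.
        (* compute k via L s m *)
        pose proof (Ladd s m (scal (opp one) m)) as Q.
        rewrite Hk in Q. rewrite (scal_opp_one (K:=C_Ring)) in Q.
        rewrite (plus_opp_r (G:=HG)), L0 in Q.
        apply (f_equal (fun w => Cminus w (L s m))) in Q.
        replace (Cminus (RtoC 0) (L s m)) with (Copp (L s m)) in Q by ring.
        replace (Cminus (Cplus (L s m) (Cmult k (L s m))) (L s m)) with (Cmult k (L s m)) in Q by ring.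
        rewrite <- Q. ring. }
      rewrite H0. eapply Rle_lt_trans. apply Lb.
      apply Rle_lt_trans with (c' * nrm (minus x m)).
      apply Rmult_le_compat_r. apply nrm_ge0. unfold c'. pose proof (Rle_abs c). lra.
      apply Rmult_lt_reg_l with (/ c'). apply Rinv_0_lt_compat; lra.
      rewrite <- Rmult_assoc, Rinv_l, Rmult_1_l by lra. unfold Rdiv in *. lra. }
    pose proof (Bd y). pose proof (Bd t). specialize (Hy y Hyd).
    pose proof (Cmod_tri3 (L y x) (L y m) (L t x)) as T1.
    pose proof (Cmod_tri3 (L y m) (L t m) (L t x)) as T2.
    rewrite (Cmod_minus_sym (L t m) (L t x)) in T2. lra.
Qed.

End HB3.

Fixpoint csum (f : nat -> C) (n : nat) : C :=
  match n with O => RtoC 0 | S n => Cplus (csum f n) (f n) end.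
Fixpoint rsum (f : nat -> R) (n : nat) : R :=
  match n with O => 0 | S n => rsum f n + f n end.

Lemma csum_ext f g n : (forall j, (j < n)%nat -> f j = g j) -> csum f n = csum g n.
Proof. induction n; simpl; intros; auto. rewrite IHn, H; auto. Qed.
Lemma rsum_ext f g n : (forall j, (j < n)%nat -> f j = g j) -> rsum f n = rsum g n.
Proof. induction n; simpl; intros; auto. rewrite IHn, H; auto. Qed.
Lemma csum_plus f g n : csum (fun j => Cplus (f j) (g j)) n = Cplus (csum f n) (csum g n).
Proof. induction n; simpl. ring. rewrite IHn. ring. Qed.
Lemma csum_mult_l c f n : csum (fun j => Cmult c (f j)) n = Cmult c (csum f n).
Proof. induction n; simpl. ring. rewrite IHn. ring. Qed.
Lemma csum_conj f n : csum (fun j => Cconj (f j)) n = Cconj (csum f n).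
Proof. induction n; simpl. apply injective_projections; simpl; ring. rewrite IHn, Cplus_conj. auto. Qed.
Lemma csum_zero f n : (forall j, (j < n)%nat -> f j = RtoC 0) -> csum f n = RtoC 0.
Proof. induction n; simpl; intros; auto. rewrite IHn, H; auto. ring. Qed.
Lemma csum_single f n i : (i < n)%nat -> (forall j, (j < n)%nat -> j <> i -> f j = RtoC 0) ->
  csum f n = f i.
Proof.
  induction n; intros Hi Hz. lia. simpl.
  destruct (Nat.eq_dec i n).
  - subst. rewrite csum_zero. ring. intros j Hj. apply Hz; lia.
  - rewrite IHn by (try lia; intros; apply Hz; lia). rewrite (Hz n) by lia. ring.
Qed.
Lemma csum_re f n : Re (csum f n) = rsum (fun j => Re (f j)) n.
Proof. induction n; simpl; auto. rewrite <- IHn. auto. Qed.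
Lemma rsum_nonneg f n : (forall j, 0 <= f j) -> 0 <= rsum f n.
Proof. intro Hf. induction n; simpl. lra. specialize (Hf n). lra. Qed.
Lemma rsum_mono f n m : (forall j, 0 <= f j) -> (n <= m)%nat -> rsum f n <= rsum f m.
Proof. intros Hf Hnm. induction Hnm; simpl. lra. specialize (Hf m). lra. Qed.
Lemma sum_n_rsum (f : nat -> R) N : sum_n f N = rsum f (S N).
Proof. induction N. simpl. rewrite sum_O. ring. rewrite sum_Sn, IHN. simpl. reflexivity. Qed.
Lemma sum_n_csum (f : nat -> C) N : sum_n f N = csum f (S N).
Proof. induction N. simpl. rewrite sum_O. apply injective_projections; simpl; ring.
  rewrite sum_Sn, IHN. simpl. reflexivity. Qed.

Section HB4.
Variable H : Hilbert.
Notation ip := (hinner H).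
Notation nrm := (hnorm H).
Notation HG := (ModuleSpace.AbelianGroup C_Ring (hcar H)).

Fixpoint hsum (f : nat -> H) (n : nat) : H :=
  match n with O => zero | S n => plus (hsum f n) (f n) end.

Lemma hsum_ext f g n : (forall j, (j < n)%nat -> f j = g j) -> hsum f n = hsum g n.
Proof. induction n; simpl; intros; auto. rewrite IHn, H0; auto. Qed.

Lemma ip_hsum_l f n y : ip (hsum f n) y = csum (fun j => ip (f j) y) n.
Proof. induction n; simpl. apply ip_zero_l. rewrite hinner_addl, IHn. auto. Qed.
Lemma ip_hsum_r f n y : ip y (hsum f n) = csum (fun j => ip y (f j)) n.
Proof. induction n; simpl. apply ip_zero_r. rewrite ip_addr, IHn. auto. Qed.

Lemma Hplus_swap4 (a b c d : H) : plus (plus a b) (plus c d) = plus (plus a c) (plus b d).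
Proof.
  rewrite <- !(plus_assoc (G:=HG)). f_equal. rewrite !(plus_assoc (G:=HG)). f_equal.
  apply (plus_comm (G:=HG)).
Qed.

Lemma hsum_plus f g n : hsum (fun j => plus (f j) (g j)) n = plus (hsum f n) (hsum g n).
Proof.
  induction n; simpl. symmetry. apply (plus_zero_l (G:=HG)).
  rewrite IHn. apply Hplus_swap4.
Qed.

Lemma hsum_scal a f n : hsum (fun j => scal a (f j)) n = scal a (hsum f n).
Proof.
  induction n; simpl. symmetry. exact (scal_zero_r (K:=C_Ring) (V:=H) a).
  rewrite IHn. symmetry. apply Hscal_distr_l.
Qed.

Lemma Hzero_plus (x : H) : plus zero x = x.
Proof. apply (plus_zero_l (G:=HG)). Qed.
Lemma Hplus_zero (x : H) : plus x zero = x.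
Proof. apply (plus_zero_r (G:=HG)). Qed.
Lemma Hscal0 (x : H) : scal (RtoC 0) x = zero.
Proof. exact (scal_zero_l (K:=C_Ring) x). Qed.
Lemma Hscal_zero (a : C) : scal a (zero : H) = zero.
Proof. exact (scal_zero_r (K:=C_Ring) (V:=H) a). Qed.

Lemma hsum_extend f n m : (n <= m)%nat -> (forall j, (n <= j)%nat -> f j = zero) -> hsum f m = hsum f n.
Proof.
  intros Hnm Hz. induction Hnm; auto. simpl. rewrite IHHnm, Hz by lia. apply Hplus_zero.
Qed.

Lemma Hminus_plus_distr (a b c d : H) : minus (plus a b) (plus c d) = plus (minus a c) (minus b d).
Proof. symmetry. apply Hminus_pp. Qed.

Lemma Hminus_scal (a : C) (x y : H) : minus (scal a x) (scal a y) = scal a (minus x y).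
Proof. symmetry. apply Hscal_minus_l. Qed.

(** orthonormal-or-zero families *)
Definition ONN (e : nat -> H) (N : nat) : Prop :=
  (forall i j, (i < N)%nat -> (j < N)%nat -> i <> j -> ip (e i) (e j) = RtoC 0) /\
  (forall i, (i < N)%nat -> e i = zero \/ ip (e i) (e i) = RtoC 1).

Definition ON (e : nat -> H) : Prop := forall N, ONN e N.

Definition Sp (e : nat -> H) (N : nat) (x : H) : H :=
  hsum (fun j => scal (ip x (e j)) (e j)) N.

Definition inspan (e : nat -> H) (N : nat) (z : H) : Prop :=
  exists c : nat -> C, z = hsum (fun j => scal (c j) (e j)) N.

Lemma ONN_fix e N x i : ONN e N -> (i < N)%nat -> Cmult (ip x (e i)) (ip (e i) (e i)) = ip x (e i).
Proof.
  intros [_ Hn] Hi. destruct (Hn i Hi) as [Z|U].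
  - rewrite Z, ip_zero_r. ring.
  - rewrite U. ring.
Qed.

Lemma Sp_ip_e e N x i : ONN e N -> (i < N)%nat -> ip (Sp e N x) (e i) = ip x (e i).
Proof.
  intros HO Hi. unfold Sp. rewrite ip_hsum_l.
  rewrite (csum_single _ N i Hi).
  - rewrite hinner_scall. apply (ONN_fix e N x i HO Hi).
  - intros j Hj Hji. rewrite hinner_scall. destruct HO as [Ho _]. rewrite Ho; auto. ring.
Qed.

Lemma Sp_perp_e e N x i : ONN e N -> (i < N)%nat -> ip (minus x (Sp e N x)) (e i) = RtoC 0.
Proof. intros. rewrite ip_minus_l, Sp_ip_e; auto. ring. Qed.

Lemma Sp_perp_span e N x z : ONN e N -> inspan e N z -> ip (minus x (Sp e N x)) z = RtoC 0.
Proof.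
  intros HO [c ->]. rewrite ip_hsum_r. apply csum_zero. intros j Hj.
  rewrite ip_scalr, Sp_perp_e; auto. ring.
Qed.

Lemma Sp_inspan e N x : inspan e N (Sp e N x).
Proof. exists (fun j => ip x (e j)). reflexivity. Qed.

Lemma inspan_minus e N z1 z2 : inspan e N z1 -> inspan e N z2 -> inspan e N (minus z1 z2).
Proof.
  intros [c1 ->] [c2 ->]. exists (fun j => Cminus (c1 j) (c2 j)).
  induction N; simpl. first [apply Hminus_eq0 | symmetry; apply Hminus_eq0].
  rewrite Hminus_plus_distr, IHN. f_equal.
  unfold Cminus. rewrite Hscal_distr_r. unfold minus. f_equal.
  rewrite <- (scal_opp_l (K:=C_Ring)). reflexivity.
Qed.

Lemma pythag (x y : H) : ip x y = RtoC 0 -> nrm (plus x y) ^ 2 = nrm x ^ 2 + nrm y ^ 2.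
Proof. intro E. rewrite nrm_plus_sq, E. simpl. ring. Qed.

Lemma Sp_pythag e N x : ONN e N -> nrm x ^ 2 = nrm (Sp e N x) ^ 2 + nrm (minus x (Sp e N x)) ^ 2.
Proof.
  intro HO. rewrite <- (Hplus_minus H (Sp e N x) x) at 1. apply pythag.
  rewrite hinner_sym, Sp_perp_span; auto. apply injective_projections; simpl; ring.
  apply Sp_inspan.
Qed.

Lemma Sp_nrm_le e N x : ONN e N -> nrm (Sp e N x) <= nrm x.
Proof.
  intro HO. pose proof (Sp_pythag e N x HO). apply Rsqr_incr_0_var. unfold Rsqr.
  pose proof (pow2_ge_0 (nrm (minus x (Sp e N x)))). nra. apply nrm_ge0.
Qed.

Lemma Sp_nrm_sq e N x : ONN e N -> nrm (Sp e N x) ^ 2 = rsum (fun j => Cmod (ip x (e j)) ^ 2) N.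
Proof.
  intro HO. rewrite nrm_sq. unfold Sp at 1. rewrite ip_hsum_l, csum_re. apply rsum_ext.
  intros j Hj. rewrite hinner_scall, (hinner_sym H (Sp e N x) (e j)), Sp_ip_e; auto.
  rewrite Cmod2_alt. destruct (ip x (e j)). simpl. ring.
Qed.

Lemma bessel e N x : ONN e N -> rsum (fun j => Cmod (ip x (e j)) ^ 2) N <= nrm x ^ 2.
Proof.
  intro HO. rewrite <- Sp_nrm_sq by auto. pose proof (Sp_pythag e N x HO).
  pose proof (pow2_ge_0 (nrm (minus x (Sp e N x)))). lra.
Qed.

Lemma best_approx e N x z : ONN e N -> inspan e N z -> nrm (minus x (Sp e N x)) <= nrm (minus x z).
Proof.
  intros HO Hz.
  assert (E : minus x z = plus (minus x (Sp e N x)) (minus (Sp e N x) z)).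
  { apply minus_trans. }
  assert (P : nrm (minus x z) ^ 2 = nrm (minus x (Sp e N x)) ^ 2 + nrm (minus (Sp e N x) z) ^ 2).
  { rewrite E. apply pythag. apply Sp_perp_span; auto. apply inspan_minus; auto. apply Sp_inspan. }
  apply Rsqr_incr_0_var. unfold Rsqr. pose proof (pow2_ge_0 (nrm (minus (Sp e N x) z))). nra.
  apply nrm_ge0.
Qed.

Lemma inspan_mono e N M z : (N <= M)%nat -> inspan e N z -> inspan e M z.
Proof.
  intros HNM [c ->]. exists (fun j => if Nat.ltb j N then c j else RtoC 0).
  transitivity (hsum (fun j => scal (if Nat.ltb j N then c j else RtoC 0) (e j)) N).
  - apply hsum_ext. intros j Hj. apply Nat.ltb_lt in Hj. rewrite Hj. auto.
  - symmetry. apply hsum_extend; auto. intros j Hj. assert (Nat.ltb j N = false) by (apply Nat.ltb_ge; lia). rewrite H0. apply Hscal0.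
Qed.

Lemma Sp_plus e N x y : Sp e N (plus x y) = plus (Sp e N x) (Sp e N y).
Proof.
  unfold Sp. rewrite <- hsum_plus. apply hsum_ext. intros j _.
  rewrite hinner_addl, Hscal_distr_r. auto.
Qed.

Lemma Sp_scal e N a x : Sp e N (scal a x) = scal a (Sp e N x).
Proof.
  unfold Sp. rewrite <- hsum_scal. apply hsum_ext. intros j _.
  rewrite hinner_scall, Hscal_assoc. auto.
Qed.

Lemma Sp_minus e N x y : Sp e N (minus x y) = minus (Sp e N x) (Sp e N y).
Proof.
  unfold minus. rewrite Sp_plus. f_equal.
  rewrite <- (scal_opp_one (K:=C_Ring)). rewrite Sp_scal. apply (scal_opp_one (K:=C_Ring)).
Qed.

Definition approx (e : nat -> H) (x : H) : Prop :=
  forall eps, 0 < eps -> exists N, forall M, (N <= M)%nat -> nrm (minus x (Sp e M x)) < eps.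

Lemma approx_mono e x N M : ON e -> (N <= M)%nat -> nrm (minus x (Sp e M x)) <= nrm (minus x (Sp e N x)).
Proof.
  intros HO HNM. apply best_approx; auto. apply inspan_mono with N; auto. apply Sp_inspan.
Qed.

Lemma approx_closed_subspace e : ON e -> subspace H (approx e) /\ closedP H (approx e).
Proof.
  intro HO. split; [split; [|split]|].
  - intros eps He. exists O. intros M _. unfold Sp.
    replace (hsum (fun j => scal (ip zero (e j)) (e j)) M) with (zero : H).
    rewrite Hminus_eq0, nrm_zero. auto.
    symmetry. rewrite (hsum_ext _ (fun j => scal (RtoC 0) (e j))).
    rewrite hsum_scal. apply Hscal0. intros. rewrite ip_zero_l. auto.
  - intros x y Hx Hy eps He.
    destruct (Hx (eps/2)) as [N1 H1]. lra. destruct (Hy (eps/2)) as [N2 H2]. lra.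
    exists (Nat.max N1 N2). intros M HM.
    rewrite Sp_plus, Hminus_plus_distr. eapply Rle_lt_trans. apply nrm_triangle.
    pose proof (H1 M ltac:(lia)). pose proof (H2 M ltac:(lia)). lra.
  - intros a x Hx eps He.
    destruct (Hx (eps / (Cmod a + 1))) as [N1 H1].
    apply Rdiv_lt_0_compat; [lra| pose proof (Cmod_ge_0 a); lra].
    exists N1. intros M HM. rewrite Sp_scal, Hminus_scal, nrm_scal.
    pose proof (H1 M HM). pose proof (Cmod_ge_0 a). pose proof (nrm_ge0 H (minus x (Sp e M x))).
    apply Rle_lt_trans with ((Cmod a + 1) * nrm (minus x (Sp e M x))). nra.
    apply Rmult_lt_reg_l with (/ (Cmod a + 1)). apply Rinv_0_lt_compat; lra.
    rewrite <- Rmult_assoc, Rinv_l, Rmult_1_l by lra. unfold Rdiv in H0. lra.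
  - intros x Hx eps He.
    destruct (Hx (eps/3)) as [y [Hy Hxy]]. lra.
    destruct (Hy (eps/3)) as [N HN]. lra.
    exists N. intros M HM.
    assert (E : minus x (Sp e M x) =
      plus (minus x y) (plus (minus y (Sp e M y)) (Sp e M (minus y x)))).
    { rewrite Sp_minus. rewrite (minus_trans y x (Sp e M x)).
      f_equal. apply minus_trans. }
    rewrite E. eapply Rle_lt_trans. apply nrm_triangle.
    eapply Rle_lt_trans. apply Rplus_le_compat_l. apply nrm_triangle.
    pose proof (Sp_nrm_le e M (minus y x) (HO M)). rewrite nrm_minus_sym in H0.
    pose proof (HN M HM). lra.
Qed.

Lemma approx_of_inspan e N z : ON e -> inspan e N z -> approx e z.
Proof.
  intros HO Hz eps He. exists N. intros M HM.
  eapply Rle_lt_trans. apply best_approx with (z := z). apply HO.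
  apply inspan_mono with N; auto. rewrite Hminus_eq0, nrm_zero. auto.
Qed.

Section GS.
Variable v : nat -> H.

Definition gs_next (g : nat -> H) (n : nat) : H :=
  let r := minus (v n) (hsum (fun j => scal (ip (v n) (g j)) (g j)) n) in
  if Req_EM_T (nrm r) 0 then zero else scal (RtoC (/ nrm r)) r.

Fixpoint gsf (n : nat) : nat -> H :=
  match n with
  | O => fun _ => zero
  | S n => fun j => if Nat.eq_dec j n then gs_next (gsf n) n else gsf n j
  end.

Definition gs (k : nat) : H := gsf (S k) k.

Lemma gsf_stable n j : (j < n)%nat -> gsf n j = gs j.
Proof.
  induction n; intros Hj. lia. simpl. destruct (Nat.eq_dec j n).
  - subst. unfold gs. simpl. destruct (Nat.eq_dec n n); [auto| congruence].
  - apply IHn. lia.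
Qed.

Lemma gs_eq n : gs n =
  let r := minus (v n) (Sp gs n (v n)) in
  if Req_EM_T (nrm r) 0 then zero else scal (RtoC (/ nrm r)) r.
Proof.
  unfold gs. simpl. destruct (Nat.eq_dec n n); [|congruence]. unfold gs_next, Sp.
  rewrite (hsum_ext _ (fun j => scal (ip (v n) (gs j)) (gs j))). auto.
  intros j Hj. rewrite gsf_stable; auto.
Qed.

Lemma gs_ONN : forall N, ONN gs N.
Proof.
  induction N.
  - split; intros; lia.
  - assert (Hn : (forall i, (i < N)%nat -> ip (gs N) (gs i) = RtoC 0) /\
                 (gs N = zero \/ ip (gs N) (gs N) = RtoC 1)).
    { rewrite (gs_eq N). simpl.
      set (r := minus (v N) (Sp gs N (v N))).
      destruct (Req_EM_T (nrm r) 0) as [Z|NZ].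
      - split. intros. apply ip_zero_l. left; auto.
      - split.
        + intros i Hi. rewrite hinner_scall. unfold r. rewrite Sp_perp_e; auto. ring.
        + right. rewrite hinner_scall, ip_scalr, (ip_self_nrm H r).
          apply injective_projections; simpl; field; auto. }
    destruct IHN as [Ho Hn']. destruct Hn as [Hn1 Hn2]. split.
    + intros i j Hi Hj Hij.
      destruct (Nat.eq_dec i N); destruct (Nat.eq_dec j N); subst; try congruence.
      * apply Hn1; lia.
      * rewrite hinner_sym, Hn1 by lia. apply injective_projections; simpl; ring.
      * apply Ho; lia.
    + intros i Hi. destruct (Nat.eq_dec i N). subst; auto. apply Hn'; lia.
Qed.

Lemma gs_ON : ON gs.
Proof. intro N. apply gs_ONN. Qed.

Lemma gs_inspan_v n : inspan gs (S n) (v n).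
Proof.
  pose proof (gs_eq n) as E. simpl in E.
  set (r := minus (v n) (Sp gs n (v n))) in E.
  destruct (Req_EM_T (nrm r) 0) as [Z|NZ].
  - exists (fun j => if Nat.ltb j n then ip (v n) (gs j) else RtoC 0).
    simpl. rewrite Nat.ltb_irrefl, Hscal0, Hplus_zero.
    apply nrm_eq0 in Z. unfold r in Z.
    assert (Ev : v n = Sp gs n (v n)).
    { pose proof (Hplus_minus H (Sp gs n (v n)) (v n)) as Q. rewrite Z, Hplus_zero in Q. auto. }
    rewrite Ev at 1. unfold Sp. apply hsum_ext. intros j Hj. apply Nat.ltb_lt in Hj. rewrite Hj. auto.
    exists (fun j => if Nat.ltb j n then ip (v n) (gs j) else RtoC (nrm r)).
    simpl. rewrite Nat.ltb_irrefl.
    assert (Ev : v n = plus (Sp gs n (v n)) r) by (symmetry; apply Hplus_minus).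
    rewrite Ev at 1. f_equal.
    + unfold Sp. apply hsum_ext. intros j Hj. apply Nat.ltb_lt in Hj. rewrite Hj. auto.
    + rewrite E, Hscal_assoc, <- RtoC_mult, Rinv_r, Hscal1; auto.
Qed.

Lemma gs_in M : subspace H M -> (forall k, M (v k)) -> forall n, M (gs n).
Proof.
  intros HM Hv. intro n. induction n as [n IH] using lt_wf_ind.
  rewrite gs_eq. simpl. destruct (Req_EM_T _ 0). apply HM.
  apply HM. apply sub_minus; auto.
  unfold Sp. clear -HM IH. assert (forall m, (m <= n)%nat -> M (hsum (fun j => scal (ip (v n) (gs j)) (gs j)) m)).
  { induction m; intros. simpl. apply HM. simpl. apply HM. apply IHm. lia. apply HM. apply IH. lia. }
  apply H0. lia.
Qed.

End GS.

End HB4.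

Lemma is_series_R_eps (a : nat -> R) (l : R) :
  is_series a l <-> forall eps, 0 < eps -> exists N, forall n, (N <= n)%nat -> Rabs (sum_n a n - l) < eps.
Proof.
  split.
  - intros Hs eps He. destruct (proj1 (filterlim_locally (sum_n a) l) Hs (mkposreal _ He)) as [N HN].
    exists N. intros n Hn. apply HN in Hn. exact Hn.
  - intros Hd. apply filterlim_locally. intro eps. destruct (Hd eps (cond_pos eps)) as [N HN].
    exists N. intros n Hn. apply HN. auto.
Qed.

Lemma rser_bound (a : nat -> R) (B : R) :
  (forall n, 0 <= a n) -> (forall N, rsum a N <= B) -> ex_series a /\ Series a <= B.
Proof.
  intros Hp Hb.
  assert (Hinc : forall n, sum_n a n <= sum_n a (S n)).
  { intro n. rewrite sum_Sn. specialize (Hp (S n)). simpl. unfold plus; simpl. lra. }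
  assert (Hbd : forall n, sum_n a n <= B) by (intro n; rewrite sum_n_rsum; auto).
  destruct (ex_finite_lim_seq_incr _ B Hinc Hbd) as [l Hl].
  assert (Hs : is_series a l).
  { apply is_series_R_eps. intros eps He. apply is_lim_seq_spec in Hl.
    destruct (Hl (mkposreal _ He)) as [N HN]. exists N. intros n Hn. apply HN; auto. }
  split. exists l. auto.
  rewrite (is_series_unique a l Hs).
  assert (Rbar_le l B).
  { apply (is_lim_seq_le (sum_n a) (fun _ => B) l B); auto. apply is_lim_seq_const. }
  simpl in H. auto.
Qed.

Lemma rser_partial_le (a : nat -> R) N :
  (forall n, 0 <= a n) -> ex_series a -> rsum a N <= Series a.
Proof.
  intros Hp [l Hl]. rewrite (is_series_unique a l Hl).
  apply Rnot_lt_le. intro Hlt.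
  destruct (proj1 (is_series_R_eps a l) Hl (rsum a N - l)) as [M HM]. lra.
  specialize (HM (Nat.max M N) ltac:(lia)). rewrite sum_n_rsum in HM.
  pose proof (rsum_mono a N (S (Nat.max M N)) Hp ltac:(lia)).
  apply Rabs_def2 in HM. lra.
Qed.

Lemma rser_cauchy (a : nat -> R) :
  ex_series a -> forall eps, 0 < eps -> exists N, forall n m, (N <= n)%nat -> (N <= m)%nat ->
    Rabs (rsum a n - rsum a m) < eps.
Proof.
  intros [l Hl] eps He.
  destruct (proj1 (is_series_R_eps a l) Hl (eps/2)) as [M HM]. lra.
  exists (S M). intros n m Hn Hm.
  destruct n. lia. destruct m. lia.
  rewrite <- !sum_n_rsum. pose proof (HM n ltac:(lia)). pose proof (HM m ltac:(lia)).
  apply Rabs_def2 in H. apply Rabs_def2 in H0. apply Rabs_def1; lra.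
Qed.

Section L2.
Variables (E F : Hilbert).
Variables (ee : nat -> E) (ff : nat -> F) (T : F -> E).
Hypotheses (Hee : ON E ee) (Hff : ON F ff) (HT : Clinear F E T)
  (HTb : forall x, hnorm E (T x) <= hnorm F x).

Lemma T_zero : T zero = zero.
Proof.
  destruct HT as [_ Hs]. rewrite <- (Hscal0 F zero), Hs. apply Hscal0.
Qed.

Lemma T_hsum f n : T (hsum F f n) = hsum E (fun j => T (f j)) n.
Proof.
  induction n; simpl. apply T_zero. destruct HT as [Ha _]. rewrite Ha, IHn. auto.
Qed.

Lemma T_minus x y : T (minus x y) = minus (T x) (T y).
Proof.
  destruct HT as [Ha Hs]. unfold minus. rewrite Ha.
  rewrite <- (scal_opp_one (K:=C_Ring) y), Hs. rewrite (scal_opp_one (K:=C_Ring)). auto.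
Qed.

Lemma rsum_le f g n : (forall j, (j < n)%nat -> f j <= g j) -> rsum f n <= rsum g n.
Proof. induction n; simpl; intros; try lra. pose proof (H n ltac:(lia)). pose proof (IHn ltac:(intros; apply H; lia)). lra. Qed.

Lemma nrm_hsum_le (e : nat -> F) (c : nat -> C) M : ONN F e M ->
  hnorm F (hsum F (fun n => scal (c n) (e n)) M) ^ 2 <= rsum (fun n => Cmod (c n) ^ 2) M.
Proof.
  intro HO. set (z := hsum F (fun n => scal (c n) (e n)) M).
  assert (Hz : forall j, (j < M)%nat -> hinner F (e j) z = Cmult (Cconj (c j)) (hinner F (e j) (e j))).
  { intros j Hj. unfold z. rewrite ip_hsum_r. rewrite (csum_single _ M j Hj).
    rewrite ip_scalr. auto. intros i Hi Hij. rewrite ip_scalr. destruct HO as [Ho _]. rewrite Ho; auto. ring. }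
  rewrite nrm_sq. unfold z at 1. rewrite ip_hsum_l, csum_re. apply rsum_le.
  intros j Hj. rewrite hinner_scall, Hz by auto. destruct HO as [_ Hn].
  rewrite Cmod2_alt.
  destruct (Hn j Hj) as [Z|U].
  - rewrite Z, ip_zero_l. destruct (c j). simpl. nra.
  - rewrite U. destruct (c j). simpl. nra.
Qed.

Lemma ON_nrm_le1 (H : Hilbert) (e : nat -> H) : ON H e -> forall m, hnorm H (e m) <= 1.
Proof.
  intros HO m. destruct (HO (S m)) as [_ Hn]. destruct (Hn m ltac:(lia)) as [Z|U].
  - rewrite Z, nrm_zero. lra.
  - unfold hnorm. rewrite U. simpl. rewrite sqrt_1. lra.
Qed.

Lemma rsum_tail (f : nat -> R) N M : (N <= M)%nat ->
  rsum (fun n => if Nat.leb N n then f n else 0) M = rsum f M - rsum f N.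
Proof.
  intro HNM. induction HNM.
  - rewrite (rsum_ext _ (fun _ => 0)). clear. induction N; simpl; lra.
    intros j Hj. assert (Nat.leb N j = false) by (apply Nat.leb_gt; lia). rewrite H. auto.
  - simpl. rewrite IHHNM. assert (Nat.leb N m = true) by (apply Nat.leb_le; lia). rewrite H. ring.
Qed.

Lemma Hminus_plus_l (H : Hilbert) (a b : H) : minus (plus a b) a = b.
Proof.
  rewrite (Hplus_comm H a b). unfold minus.
  rewrite <- (plus_assoc (G:=ModuleSpace.AbelianGroup C_Ring (hcar H))),
    (plus_opp_r (G:=ModuleSpace.AbelianGroup C_Ring (hcar H))).
  apply (plus_zero_r (G:=ModuleSpace.AbelianGroup C_Ring (hcar H))).
Qed.

Lemma Hminus_zero_eq (H : Hilbert) (a b : H) : minus a b = zero -> a = b.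
Proof.
  intro Heq. rewrite <- (Hplus_minus H b a), Heq. apply Hplus_zero.
Qed.

Lemma l2_contr : l2_contraction (fun m n => hinner E (T (ff n)) (ee m)).
Proof.
  intros x Hx.
  set (g := fun N => hsum F (fun n => scal (x n) (ff n)) N).
  set (ax := fun n => Cmod (x n) ^ 2).
  assert (Hax : forall n, 0 <= ax n) by (intro; apply pow2_ge_0).
  assert (Hdiff : forall N M, (N <= M)%nat -> minus (g M) (g N) =
            hsum F (fun n => scal (if Nat.leb N n then x n else RtoC 0) (ff n)) M).
  { intros N M HNM.
    assert (E1 : g M = plus (hsum F (fun n => scal (if Nat.ltb n N then x n else RtoC 0) (ff n)) M)
                          (hsum F (fun n => scal (if Nat.leb N n then x n else RtoC 0) (ff n)) M)).
    { unfold g. rewrite <- hsum_plus. apply hsum_ext. intros j _.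
      rewrite <- Hscal_distr_r. f_equal.
      destruct (Nat.ltb_spec j N); destruct (Nat.leb_spec N j); try lia; ring. }
    assert (E2 : hsum F (fun n => scal (if Nat.ltb n N then x n else RtoC 0) (ff n)) M = g N).
    { rewrite (hsum_extend F _ N M HNM).
      - unfold g. apply hsum_ext. intros j Hj. apply Nat.ltb_lt in Hj. rewrite Hj. auto.
      - intros j Hj. assert (Nat.ltb j N = false) by (apply Nat.ltb_ge; lia). rewrite H. apply Hscal0. }
    rewrite E1, E2. apply Hminus_plus_l. }
  assert (Hdn : forall N M, (N <= M)%nat -> hnorm F (minus (g M) (g N)) ^ 2 <= rsum ax M - rsum ax N).
  { intros N M HNM. rewrite Hdiff by auto. eapply Rle_trans. apply nrm_hsum_le. apply Hff.
    rewrite <- rsum_tail by auto. apply rsum_le. intros j _. unfold ax.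
    destruct (Nat.leb N j). lra. rewrite Cmod_0. simpl. lra. }
  assert (Hcau : forall eps, 0 < eps -> exists N : nat, forall m n, (N <= m)%nat -> (N <= n)%nat ->
          sqrt (Re (hinner F (minus (g m) (g n)) (minus (g m) (g n)))) < eps).
  { intros eps He. destruct (rser_cauchy ax Hx (eps ^ 2)) as [N HN]. apply pow_lt; lra.
    exists N. intros m n Hm Hn. fold (hnorm F (minus (g m) (g n))).
    assert (hnorm F (minus (g m) (g n)) ^ 2 < eps ^ 2).
    { destruct (Nat.le_ge_cases n m) as [Hnm|Hmn].
      - pose proof (Hdn n m Hnm). pose proof (HN m n Hm Hn). apply Rabs_def2 in H0. lra.
      - rewrite nrm_minus_sym. pose proof (Hdn m n Hmn). pose proof (HN m n Hm Hn). apply Rabs_def2 in H0. lra. }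
    pose proof (nrm_ge0 F (minus (g m) (g n))). nra. }
  destruct (hcomplete F g Hcau) as [gl Hgl].
  set (Sx := Series ax).
  assert (HgN : forall N, hnorm F (g N) ^ 2 <= Sx).
  { intro N. eapply Rle_trans. apply nrm_hsum_le. apply Hff. apply rser_partial_le; auto. }
  assert (HSx : 0 <= Sx) by (pose proof (HgN O); pose proof (pow2_ge_0 (hnorm F (g O))); lra).
  assert (Hgl2 : hnorm F gl ^ 2 <= Sx).
  { assert (hnorm F gl <= sqrt Sx).
    { apply Rnot_lt_le. intro Hlt.
      destruct (Hgl (hnorm F gl - sqrt Sx)) as [N HN]. lra.
      specialize (HN N (le_n N)).
      pose proof (nrm_triangle F (g N) (minus gl (g N))).
      rewrite Hplus_minus in H. rewrite nrm_minus_sym in H.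
      assert (hnorm F (g N) <= sqrt Sx).
      { apply Rsqr_incr_0_var. unfold Rsqr. rewrite sqrt_sqrt by auto. pose proof (HgN N). lra.
        apply sqrt_pos. }
      fold (hnorm F (minus (g N) gl)) in HN. lra. }
    pose proof (nrm_ge0 F gl). assert (Hp : hnorm F gl ^ 2 <= sqrt Sx ^ 2) by (apply pow_incr; lra).
    rewrite pow2_sqrt in Hp by auto. auto. }
  exists (fun m => hinner E (T gl) (ee m)). split; [|split].
  - intro m. apply is_series_C_eps. intros eps He.
    destruct (Hgl eps He) as [N HN]. exists N. intros n Hn.
    rewrite sum_n_csum.
    assert (Ec : csum (fun n => Cmult (hinner E (T (ff n)) (ee m)) (x n)) (S n) = hinner E (T (g (S n))) (ee m)).
    { unfold g. rewrite T_hsum, ip_hsum_l. apply csum_ext. intros j _.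
      destruct HT as [_ Hs]. rewrite Hs, hinner_scall. apply Cmult_comm. }
    rewrite Ec, <- ip_minus_l, <- T_minus.
    eapply Rle_lt_trans. apply Cauchy_Schwarz. pose proof (ON_nrm_le1 E ee Hee m).
    pose proof (HTb (minus (g (S n)) gl)). pose proof (nrm_ge0 E (T (minus (g (S n)) gl))).
    specialize (HN (S n) ltac:(lia)). fold (hnorm F (minus (g (S n)) gl)) in HN.
    pose proof (nrm_ge0 E (ee m)). nra.
  - destruct (rser_bound (fun m => Cmod (hinner E (T gl) (ee m)) ^ 2) (hnorm F gl ^ 2)) as [A B].
    intro; apply pow2_ge_0.
    intro N. eapply Rle_trans. apply bessel. apply Hee. pose proof (HTb gl).
    pose proof (nrm_ge0 E (T gl)). apply pow_incr. lra.
    exact A.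
  - destruct (rser_bound (fun m => Cmod (hinner E (T gl) (ee m)) ^ 2) (hnorm F gl ^ 2)) as [A B].
    intro; apply pow2_ge_0.
    intro N. eapply Rle_trans. apply bessel. apply Hee. pose proof (HTb gl).
    pose proof (nrm_ge0 E (T gl)). apply pow_incr. lra.
    fold ax. fold Sx. lra.
Qed.

End L2.

Section Main.
Variables (E F : Hilbert) (alpha : R -> E) (theta : R -> F -> E) (beta : R -> F)
  (phi : R -> R -> R -> C) (d : nat -> R).
Hypotheses (Hsc : sep_continuous phi) (Hlin : forall t, Clinear F E (theta t))
  (Ha : forall s, hnorm E (alpha s) <= 1)
  (Ht : forall t (x : F), hnorm E (theta t x) <= hnorm F x)
  (Hb : forall u, hnorm F (beta u) <= 1)
  (Hphi : forall s t u, phi s t u = hinner E (alpha s) (theta t (beta u)))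
  (Hd : dense_seq d).

Lemma cont_s s t u : continuous (fun s => phi s t u) s.
Proof. destruct Hsc as [A _]. apply A. Qed.
Lemma cont_t s t u : continuous (fun t => phi s t u) t.
Proof. destruct Hsc as [_ [A _]]. apply A. Qed.
Lemma cont_u s t u : continuous (fun u => phi s t u) u.
Proof. destruct Hsc as [_ [_ A]]. apply A. Qed.

Definition VE (v : E) : Prop := exists t u, v = theta t (beta u).
Definition E0 := cspan E VE.

Lemma wc_ip_r (H : Hilbert) (a : R -> H) (c : R) : (forall s, hnorm H (a s) <= c) ->
  subspace H (fun v => forall s, continuous (fun s => hinner H (a s) v) s) /\
  closedP H (fun v => forall s, continuous (fun s => hinner H (a s) v) s).
Proof.
  intro Hc. apply (wc_closed H (fun s v => hinner H (a s) v) c).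
  - intros. apply ip_addr.
  - intros a0 x. exists (Cconj a0). intro t. apply ip_scalr.
  - intros t x. apply Cmod_ip_le. auto.
Qed.

Lemma E0_wc v : E0 v -> forall s, continuous (fun s => hinner E (alpha s) v) s.
Proof.
  intro Hv. destruct (wc_ip_r E alpha 1 Ha) as [S C].
  apply (cspan_min E VE _ S C); auto.
  intros w [t [u ->]] s. eapply cont_C_ext. 2: apply (cont_s s t u). intro. simpl. apply Hphi.
Qed.

Lemma proj_choice (H : Hilbert) (M : H -> Prop) : subspace H M -> closedP H M ->
  forall x, {p | M p /\ (forall m, M m -> hinner H p m = hinner H x m) /\ hnorm H p <= hnorm H x /\
    (forall m, M m -> hinner H (minus x p) m = RtoC 0)}.
Proof. intros. apply constructive_indefinite_description. apply proj_exists2; auto. Qed.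

Definition a (s : R) : E :=
  proj1_sig (proj_choice E E0 (cspan_subspace E VE) (cspan_closed E VE) (alpha s)).

Lemma a_spec s : E0 (a s) /\ (forall m, E0 m -> hinner E (a s) m = hinner E (alpha s) m) /\
  hnorm E (a s) <= 1.
Proof.
  unfold a. pose proof (proj2_sig (proj_choice E E0 (cspan_subspace E VE) (cspan_closed E VE) (alpha s))) as [PA [PB [PC _]]].
  split; auto. split; auto. pose proof (Ha s). lra.
Qed.

Lemma theta_add t x y : theta t (plus x y) = plus (theta t x) (theta t y).
Proof. apply (Hlin t). Qed.
Lemma theta_scal t c x : theta t (scal c x) = scal c (theta t x).
Proof. apply (Hlin t). Qed.

Lemma w_ex s t : {w : F | forall f, hinner F f w = hinner E (theta t f) (a s)}.
Proof.
  apply constructive_indefinite_description.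
  apply (riesz F (fun f => hinner E (theta t f) (a s)) 1).
  - intros. rewrite theta_add. apply hinner_addl.
  - intros. rewrite theta_scal. apply hinner_scall.
  - intros x. rewrite Cauchy_Schwarz. pose proof (a_spec s) as [_ [_ A]].
    pose proof (Ht t x). pose proof (nrm_ge0 E (a s)). pose proof (nrm_ge0 E (theta t x)).
    pose proof (nrm_ge0 F x). nra.
Qed.

Definition w s t := proj1_sig (w_ex s t).
Lemma w_spec s t f : hinner F f (w s t) = hinner E (theta t f) (a s).
Proof. unfold w. destruct (w_ex s t). simpl. auto. Qed.

Definition WF (f : F) : Prop := exists s t, f = w s t.
Definition F0 := cspan F WF.

Lemma F0_wc f : F0 f -> forall u, continuous (fun u => hinner F (beta u) f) u.
Proof.
  intro Hf. destruct (wc_ip_r F beta 1 Hb) as [S C].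
  apply (cspan_min F WF _ S C); auto.
  intros v [s [t ->]] u. eapply cont_C_ext. 2: apply cont_C_conj, (cont_u s t u).
  intro u'. simpl. rewrite w_spec, Hphi.
  pose proof (a_spec s) as [_ [A _]]. rewrite <- A.
  - symmetry. apply hinner_sym.
  - apply cspan_incl. exists t, u'. auto.
Qed.

Definition b (u : R) : F :=
  proj1_sig (proj_choice F F0 (cspan_subspace F WF) (cspan_closed F WF) (beta u)).

Lemma b_spec u : F0 (b u) /\ (forall m, F0 m -> hinner F (b u) m = hinner F (beta u) m) /\
  hnorm F (b u) <= 1.
Proof.
  unfold b. pose proof (proj2_sig (proj_choice F F0 (cspan_subspace F WF) (cspan_closed F WF) (beta u))) as [PA [PB [PC _]]].
  split; auto. split; auto. pose proof (Hb u). lra.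
Qed.

Lemma R1 s t u : hinner E (a s) (theta t (b u)) = phi s t u.
Proof.
  rewrite (hinner_sym E (theta t (b u)) (a s)).
  rewrite <- w_spec.
  pose proof (b_spec u) as [_ [B _]]. rewrite B by (apply cspan_incl; exists s, t; auto).
  rewrite w_spec. rewrite (hinner_sym E (a s) (theta t (beta u))), Cconj_conj.
  pose proof (a_spec s) as [_ [A _]]. rewrite A by (apply cspan_incl; exists t, u; auto).
  symmetry. apply Hphi.
Qed.

Lemma a_wc v : E0 v -> forall s, continuous (fun s => hinner E (a s) v) s.
Proof.
  intros Hv s. eapply cont_C_ext. 2: apply (E0_wc v Hv s).
  intro s'. simpl. symmetry. apply (a_spec s'). auto.
Qed.

Lemma b_wc f : F0 f -> forall u, continuous (fun u => hinner F (b u) f) u.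
Proof.
  intros Hf u. eapply cont_C_ext. 2: apply (F0_wc f Hf u).
  intro u'. simpl. symmetry. apply (b_spec u'). auto.
Qed.

Definition A := cspan E (fun x => exists k, x = a (d k)).
Definition B := cspan F (fun x => exists k, x = b (d k)).

Lemma A_E0 x : A x -> E0 x.
Proof.
  apply cspan_min. apply cspan_subspace. apply cspan_closed.
  intros v [k ->]. apply a_spec.
Qed.

Lemma B_F0 x : B x -> F0 x.
Proof.
  apply cspan_min. apply cspan_subspace. apply cspan_closed.
  intros v [k ->]. apply b_spec.
Qed.

Lemma in_closure_gen (H : Hilbert) (V : H -> Prop) (M0 : H -> Prop) (g : R -> H) :
  subspace H M0 -> (forall x, cspan H V x -> M0 x) ->
  (forall v, M0 v -> forall s, continuous (fun s => hinner H (g s) v) s) ->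
  (forall k, V (g (d k))) -> (forall s, M0 (g s)) -> forall s, cspan H V (g s).
Proof.
  intros HM0 HVM Hwc HV Hg s.
  destruct (proj_exists2 H (cspan H V) (cspan_subspace H V) (cspan_closed H V) (g s))
    as [p [Ap [_ [_ Hperp]]]].
  set (z := minus (g s) p).
  assert (Mz : M0 z) by (apply sub_minus; auto).
  assert (Hz0 : hinner H (g s) z = RtoC 0).
  { apply (dense_zero d (fun s => hinner H (g s) z) Hd (Hwc z Mz)).
    intro k. rewrite hinner_sym, Hperp. apply injective_projections; simpl; ring.
    apply cspan_incl. apply HV. }
  assert (Hpz : hinner H p z = RtoC 0).
  { rewrite hinner_sym, Hperp; auto. apply injective_projections; simpl; ring. }
  assert (Hzz : hinner H z z = RtoC 0).
  { unfold z at 1. rewrite ip_minus_l, Hz0, Hpz. ring. }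
  apply hinner_def in Hzz. apply Hminus_zero_eq in Hzz. rewrite Hzz. auto.
Qed.

Lemma a_in_A s : A (a s).
Proof.
  apply (in_closure_gen E _ E0 a). apply cspan_subspace. apply A_E0. apply a_wc.
  intro k. exists k. auto. intro; apply a_spec.
Qed.

Lemma b_in_B u : B (b u).
Proof.
  apply (in_closure_gen F _ F0 b). apply cspan_subspace. apply B_F0. apply b_wc.
  intro k. exists k. auto. intro; apply b_spec.
Qed.

Lemma th_cont e f : A e -> B f -> forall t, continuous (fun t => hinner E (theta t f) e) t.
Proof.
  intros He Hf.
  assert (S1 : forall u e, A e -> forall t, continuous (fun t => hinner E (theta t (b u)) e) t).
  { intros u. destruct (wc_closed E (fun t e => hinner E (theta t (b u)) e) 1) as [S C].
    - intros. apply ip_addr.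
    - intros a0 x. exists (Cconj a0). intro. apply ip_scalr.
    - intros t x. apply Cmod_ip_le. pose proof (Ht t (b u)). pose proof (b_spec u) as [_ [_ Q]]. lra.
    - apply (cspan_min E (fun x => exists k, x = a (d k)) _ S C). intros v [k ->] t.
      eapply cont_C_ext. 2: apply cont_C_conj, (cont_t (d k) t u).
      intro. simpl. rewrite <- R1. rewrite (hinner_sym E (a (d k))). reflexivity. }
  destruct (wc_closed F (fun t f => hinner E (theta t f) e) (hnorm E e)) as [S C].
  - intros. rewrite theta_add. apply hinner_addl.
  - intros a0 x. exists a0. intro. rewrite theta_scal. apply hinner_scall.
  - intros t x. rewrite Cauchy_Schwarz. pose proof (Ht t x). pose proof (nrm_ge0 E e).
    pose proof (nrm_ge0 E (theta t x)). nra.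
  - apply (cspan_min F (fun x => exists k, x = b (d k)) _ S C); auto. intros v [k ->]. apply S1; auto.
Qed.

Definition ee := gs E (fun k => a (d k)).
Definition ff := gs F (fun k => b (d k)).

Lemma ee_A m : A (ee m).
Proof. unfold ee. apply (gs_in E (fun k => a (d k)) A). apply cspan_subspace. intro k. apply cspan_incl. exists k. auto. Qed.
Lemma ff_B n : B (ff n).
Proof. unfold ff. apply (gs_in F (fun k => b (d k)) B). apply cspan_subspace. intro k. apply cspan_incl. exists k. auto. Qed.

Lemma approx_A x : A x -> approx E ee x.
Proof.
  destruct (approx_closed_subspace E ee (gs_ON E _)) as [SS CC].
  apply cspan_min; auto. intros v [k ->]. apply approx_of_inspan with (S k). apply gs_ON.
  apply gs_inspan_v.
Qed.
Lemma approx_B x : B x -> approx F ff x.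
Proof.
  destruct (approx_closed_subspace F ff (gs_ON F _)) as [SS CC].
  apply cspan_min; auto. intros v [k ->]. apply approx_of_inspan with (S k). apply gs_ON.
  apply gs_inspan_v.
Qed.

Theorem part1_main :
  exists (am : nat -> R -> C) (th : nat -> nat -> R -> C) (bn : nat -> R -> C),
        (forall m s, continuous (am m) s) /\
        (forall m n t, continuous (th m n) t) /\
        (forall n u, continuous (bn n) u) /\
        (forall s N, sum_n (fun m => (Cmod (am m s))^2) N <= 1) /\
        (forall u N, sum_n (fun n => (Cmod (bn n u))^2) N <= 1) /\
        (forall t, l2_contraction (fun m n => th m n t)) /\
        (forall s t u, exists y : nat -> C,
            (forall m, is_series (fun n => Cmult (th m n t) (bn n u)) (y m)) /\
            is_series (fun m => Cmult (am m s) (Cconj (y m))) (phi s t u)).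
Proof.
  exists (fun m s => hinner E (a s) (ee m)), (fun m n t => hinner E (theta t (ff n)) (ee m)),
    (fun n u => hinner F (b u) (ff n)).
  split; [|split; [|split; [|split; [|split; [|split]]]]].
  - intros m s. apply a_wc. apply A_E0, ee_A.
  - intros m n t. apply th_cont. apply ee_A. apply ff_B.
  - intros n u. apply b_wc. apply B_F0, ff_B.
  - intros s N. rewrite sum_n_rsum. eapply Rle_trans. apply bessel. apply gs_ON.
    pose proof (a_spec s) as [_ [_ Q]]. pose proof (nrm_ge0 E (a s)). simpl. nra.
  - intros u N. rewrite sum_n_rsum. eapply Rle_trans. apply bessel. apply gs_ON.
    pose proof (b_spec u) as [_ [_ Q]]. pose proof (nrm_ge0 F (b u)). simpl. nra.
  - intro t. apply l2_contr. apply gs_ON. apply gs_ON. apply Hlin. apply Ht.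
  - intros s t u. exists (fun m => hinner E (theta t (b u)) (ee m)). split.
    + intro m. apply is_series_C_eps. intros eps He.
      destruct (approx_B (b u) (b_in_B u) eps He) as [N HN]. exists N. intros n Hn.
      rewrite sum_n_csum.
      assert (Ec : csum (fun n => Cmult (hinner E (theta t (ff n)) (ee m)) (hinner F (b u) (ff n))) (S n)
                 = hinner E (theta t (Sp F ff (S n) (b u))) (ee m)).
      { unfold Sp. rewrite (T_hsum E F (theta t) (Hlin t)), ip_hsum_l. apply csum_ext. intros j _.
        rewrite theta_scal, hinner_scall. apply Cmult_comm. }
      rewrite Ec, <- ip_minus_l, <- (T_minus E F (theta t) (Hlin t)).
      eapply Rle_lt_trans. apply Cauchy_Schwarz.
      pose proof (ON_nrm_le1 E ee (gs_ON E _) m).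
      pose proof (Ht t (minus (Sp F ff (S n) (b u)) (b u))).
      specialize (HN (S n) ltac:(lia)). rewrite nrm_minus_sym in HN.
      pose proof (nrm_ge0 E (ee m)). pose proof (nrm_ge0 E (theta t (minus (Sp F ff (S n) (b u)) (b u)))).
      nra.
    + apply is_series_C_eps. intros eps He.
      destruct (approx_A (a s) (a_in_A s) eps He) as [N HN]. exists N. intros n Hn.
      rewrite sum_n_csum, <- R1.
      assert (Ec : csum (fun m => Cmult (hinner E (a s) (ee m)) (Cconj (hinner E (theta t (b u)) (ee m)))) (S n)
                 = hinner E (Sp E ee (S n) (a s)) (theta t (b u))).
      { unfold Sp. rewrite ip_hsum_l. apply csum_ext. intros j _.
        rewrite hinner_scall. f_equal. symmetry. apply hinner_sym. }
      rewrite Ec, <- ip_minus_l.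
      eapply Rle_lt_trans. apply Cauchy_Schwarz.
      pose proof (Ht t (b u)). pose proof (b_spec u) as [_ [_ Q]].
      specialize (HN (S n) ltac:(lia)). rewrite nrm_minus_sym in HN.
      pose proof (nrm_ge0 E (theta t (b u))).
      pose proof (nrm_ge0 E (minus (Sp E ee (S n) (a s)) (a s))). nra.
Qed.

End Main.

Definition dseq (k : nat) : R :=
  let (p, q) := Cantor.of_nat k in
  let (i, j) := Cantor.of_nat p in
  (INR i - INR j) / INR (S q).

Lemma dseq_dense : dense_seq dseq.
Proof.
  intros x eps He.
  destruct (archimed (/ eps)) as [Ha _].
  assert (Hup : (0 <= up (/ eps))%Z).
  { apply le_IZR. pose proof (Rinv_0_lt_compat _ He). lra. }
  set (q := Z.to_nat (up (/ eps))).
  assert (Hq : / INR (S q) < eps).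
  { rewrite <- (Rinv_inv eps). apply Rinv_lt_contravar.
    - apply Rmult_lt_0_compat. apply Rinv_0_lt_compat; auto. apply lt_0_INR; lia.
    - apply Rlt_le_trans with (IZR (up (/ eps))); auto.
      rewrite <- (Z2Nat.id _ Hup), <- INR_IZR_INZ. apply le_INR. unfold q. lia. }
  set (Q := INR (S q)).
  assert (HQ : 0 < Q) by (apply lt_0_INR; lia).
  destruct (archimed (x * Q)) as [A1 A2].
  set (z := (up (x * Q) - 1)%Z).
  assert (Hz1 : IZR z <= x * Q) by (unfold z; rewrite minus_IZR; simpl; lra).
  assert (Hz2 : x * Q < IZR z + 1) by (unfold z; rewrite minus_IZR; simpl; lra).
  set (i := Z.to_nat (Z.max z 0)). set (j := Z.to_nat (Z.max (- z) 0)).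
  assert (Hij : INR i - INR j = IZR z).
  { unfold i, j. rewrite !INR_IZR_INZ, !Z2Nat.id by lia.
    rewrite <- minus_IZR. f_equal. lia. }
  exists (Cantor.to_nat (Cantor.to_nat (i, j), q)).
  unfold dseq. rewrite !Cantor.cancel_of_to. fold Q. rewrite Hij.
  apply Rabs_def1.
  - apply Rmult_lt_reg_r with Q; auto. unfold Rdiv.
    replace ((IZR z * / Q - x) * Q) with (IZR z - x * Q) by (field; lra).
    assert (eps * Q > 1).
    { apply Rmult_lt_reg_r with (/ Q). apply Rinv_0_lt_compat; auto.
      replace (eps * Q * / Q) with eps by (field; lra). fold Q in Hq. lra. }
    lra.
  - apply Rmult_lt_reg_r with Q; auto. unfold Rdiv.
    replace ((IZR z * / Q - x) * Q) with (IZR z - x * Q) by (field; lra).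
    assert (eps * Q > 1).
    { apply Rmult_lt_reg_r with (/ Q). apply Rinv_0_lt_compat; auto.
      replace (eps * Q * / Q) with eps by (field; lra). fold Q in Hq. lra. }
    lra.
Qed.

Theorem part1 :
  (forall (phi : R -> R -> R -> C) (E F : Hilbert)
          (alpha : R -> E) (theta : R -> F -> E) (beta : R -> F),
      sep_continuous phi ->
      (forall t, Clinear F E (theta t)) ->
      (forall s, hnorm E (alpha s) <= 1) ->
      (forall t (x : F), hnorm E (theta t x) <= hnorm F x) ->
      (forall u, hnorm F (beta u) <= 1) ->
      (forall s t u, phi s t u = hinner E (alpha s) (theta t (beta u))) ->
      exists (a : nat -> R -> C) (th : nat -> nat -> R -> C) (b : nat -> R -> C),
        (forall m s, continuous (a m) s) /\
        (forall m n t, continuous (th m n) t) /\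
        (forall n u, continuous (b n) u) /\
        (forall s N, sum_n (fun m => (Cmod (a m s))^2) N <= 1) /\
        (forall u N, sum_n (fun n => (Cmod (b n u))^2) N <= 1) /\
        (forall t, l2_contraction (fun m n => th m n t)) /\
        (forall s t u, exists y : nat -> C,
            (forall m, is_series (fun n => Cmult (th m n t) (b n u)) (y m)) /\
            is_series (fun m => Cmult (a m s) (Cconj (y m))) (phi s t u))).
Proof.
  intros phi E F alpha theta beta Hsc Hlin Ha Ht Hb Hphi.
  apply (part1_main E F alpha theta beta phi dseq); auto. apply dseq_dense.
Qed.

Lemma cont_R_eps (f : R -> R) (x : R) :
  continuous f x <->
  (forall eps, 0 < eps -> exists del, 0 < del /\ forall y, Rabs (y - x) < del -> Rabs (f y - f x) < eps).
Proof.
  split.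
  - intros Hc eps He.
    destruct (proj1 (filterlim_locally f (f x)) Hc (mkposreal _ He)) as [del Hd].
    exists del. split. apply cond_pos. intros y Hy. apply (Hd y Hy).
  - intros Hd. apply filterlim_locally. intro eps.
    destruct (Hd eps (cond_pos eps)) as [del [Hdel Hy]].
    exists (mkposreal _ Hdel). intros y By. apply Hy. exact By.
Qed.

Lemma cR_const (c x : R) : continuous (fun _ : R => c) x.
Proof. apply continuous_const. Qed.
Lemma cR_id (x : R) : continuous (fun y : R => y) x.
Proof. apply continuous_id. Qed.
Lemma cR_plus (f g : R -> R) x : continuous f x -> continuous g x -> continuous (fun y => f y + g y) x.
Proof. intros. apply (continuous_plus (K:=R_AbsRing) (V:=R_NormedModule) f g); auto. Qed.
Lemma cR_opp (f : R -> R) x : continuous f x -> continuous (fun y => - f y) x.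
Proof. intros. apply (continuous_opp (K:=R_AbsRing) (V:=R_NormedModule) f); auto. Qed.
Lemma cR_minus (f g : R -> R) x : continuous f x -> continuous g x -> continuous (fun y => f y - g y) x.
Proof. intros. unfold Rminus. apply cR_plus; auto. apply cR_opp; auto. Qed.
Lemma cR_mult (f g : R -> R) x : continuous f x -> continuous g x -> continuous (fun y => f y * g y) x.
Proof. intros. apply (continuous_mult (K:=R_AbsRing) f g); auto. Qed.
Lemma cR_inv (f : R -> R) x : continuous f x -> f x <> 0 -> continuous (fun y => / f y) x.
Proof. intros. apply continuous_Rinv_comp; auto. Qed.
Lemma cR_div (f g : R -> R) x : continuous f x -> continuous g x -> g x <> 0 -> continuous (fun y => f y / g y) x.
Proof. intros. unfold Rdiv. apply cR_mult; auto. apply cR_inv; auto. Qed.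
Lemma cR_ext (f g : R -> R) x : (forall y, f y = g y) -> continuous f x -> continuous g x.
Proof. intros. eapply continuous_ext; eauto. Qed.
Lemma cR_ext_loc (f g : R -> R) x : (exists del, 0 < del /\ forall y, Rabs (y - x) < del -> f y = g y) ->
  continuous f x -> continuous g x.
Proof.
  intros [del [Hd Hy]] Hc. apply continuous_ext_loc with f; auto.
  exists (mkposreal _ Hd). intros y By. apply Hy. exact By.
Qed.

Definition dd1r (h : R -> R) (x0 x1 : R) : R :=
  if Req_EM_T x0 x1 then Derive h x0 else (h x0 - h x1) / (x0 - x1).
Definition dd2r (h : R -> R) (x0 x1 x2 : R) : R :=
  if Req_EM_T x0 x1 then Derive (fun x => dd1r h x x2) x1
  else (dd1r h x0 x2 - dd1r h x1 x2) / (x0 - x1).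

Section Calc.
Variable h : R -> R.
Hypothesis Hh : C2R h.

Let h1 := Derive h.
Let h2 := Derive (Derive h).

Lemma h_der x : is_derive h x (h1 x).
Proof. apply Derive_correct. apply Hh. Qed.
Lemma h1_der x : is_derive (Derive h) x (h2 x).
Proof. apply Derive_correct. apply Hh. Qed.
Lemma h_cont x : continuous h x.
Proof. apply (ex_derive_continuous (K:=R_AbsRing) (V:=R_NormedModule)). apply Hh. Qed.
Lemma h1_cont x : continuous (Derive h) x.
Proof. apply (ex_derive_continuous (K:=R_AbsRing) (V:=R_NormedModule)). apply Hh. Qed.
Lemma h2_cont x : continuous (Derive (Derive h)) x.
Proof. apply Hh. Qed.

Lemma taylor_pos x k : 0 < k -> exists z, x < z < x + k /\
  h (x + k) = h x + k * h1 x + k ^ 2 / 2 * h2 z.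
Proof.
  intro Hk. destruct (Taylor_Lagrange h 1 x (x + k)) as [z [Hz E]]. lra.
  - intros t _ n Hn. destruct n as [|[|[|n]]]; simpl; auto; try lia.
    + apply Hh.
    + apply Hh.
  - exists z. split; auto. rewrite E. simpl. unfold h1, h2.
    replace (x + k - x) with k by ring.
    change (Derive (fun x : R => h x)) with (Derive h).
    change (fun x : R => Derive h x) with (Derive h). field.
Qed.

Lemma taylor_h1 x k : 0 < k -> exists z, x < z < x + k /\
  Derive h (x + k) = Derive h x + k * h2 z.
Proof.
  intro Hk. destruct (Taylor_Lagrange (Derive h) 0 x (x + k)) as [z [Hz E]]. lra.
  - intros t _ n Hn. destruct n as [|[|n]]; simpl; auto; try lia. apply Hh.
  - exists z. split; auto. rewrite E. simpl. unfold h2.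
    replace (x + k - x) with k by ring.
    change (fun x : R => Derive h x) with (Derive h). field.
Qed.

Lemma Q2 x : forall eps, 0 < eps -> exists del, 0 < del /\ forall k, k <> 0 -> Rabs k < del ->
  Rabs ((h (x + k) - h x - h1 x * k) / k ^ 2 - h2 x / 2) < eps.
Proof.
  intros eps He.
  destruct (proj1 (cont_R_eps _ x) (h2_cont x) (eps / 2)) as [del [Hdel Hc]]. lra.
  exists del. split; auto. intros k Hk0 Hk.
  destruct (Rlt_or_le 0 k) as [Kp|Kn].
  - destruct (taylor_pos x k Kp) as [z [Hz E]]. rewrite E.
    replace ((h x + k * h1 x + k ^ 2 / 2 * h2 z - h x - h1 x * k) / k ^ 2 - h2 x / 2)
      with ((h2 z - h2 x) / 2) by (field; auto).
    assert (Rabs (z - x) < del) by (rewrite Rabs_right by lra; rewrite Rabs_right in Hk by lra; lra).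
    specialize (Hc z H). unfold h2 in *. apply Rabs_def2 in Hc. apply Rabs_def1; lra.
  - assert (Kn' : 0 < - k) by lra.
    destruct (taylor_pos (x + k) (- k) Kn') as [z [Hz E]].
    replace (x + k + - k) with x in E by ring.
    destruct (taylor_h1 (x + k) (- k) Kn') as [z' [Hz' E']].
    replace (x + k + - k) with x in E' by ring.
    fold h1 in E'.
    replace ((h (x + k) - h x - h1 x * k) / k ^ 2 - h2 x / 2)
      with ((h2 z' - h2 x) - (h2 z - h2 x) / 2).
    2:{ rewrite E, E'. field. auto. }
    assert (Rabs (z - x) < del) by (rewrite Rabs_left1 by lra; rewrite Rabs_left1 in Hk by lra; lra).
    assert (Rabs (z' - x) < del) by (rewrite Rabs_left1 by lra; rewrite Rabs_left1 in Hk by lra; lra).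
    pose proof (Hc z H) as C1. pose proof (Hc z' H0) as C2. unfold h2 in *.
    apply Rabs_def2 in C1. apply Rabs_def2 in C2. apply Rabs_def1; lra.
Qed.

Definition G (y z : R) : R := (h1 y * (y - z) - (h y - h z)) / (y - z) ^ 2.
Definition Dg (y z : R) : R := if Req_EM_T y z then h2 z / 2 else G y z.

Lemma g_der_ne z y : y <> z -> is_derive (fun w => dd1r h w z) y (G y z).
Proof.
  intro Hyz.
  apply is_derive_ext_loc with (fun w => (h w - h z) / (w - z)).
  - assert (Hd : 0 < Rabs (y - z)) by (apply Rabs_pos_lt; lra).
    exists (mkposreal _ Hd). intros w Bw. change (Rabs (w - y) < Rabs (y - z)) in Bw.
    unfold dd1r. destruct (Req_EM_T w z). subst. rewrite Rabs_minus_sym in Bw. lra. auto.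
  - unfold G. auto_derive. repeat split; auto. apply Hh. lra.
    unfold h1. change (Derive (fun x : R => h x) y) with (Derive h y). field. lra.
Qed.

Lemma g_der_eq z : is_derive (fun w => dd1r h w z) z (h2 z / 2).
Proof.
  apply is_derive_Reals. intros eps He.
  destruct (Q2 z eps He) as [del [Hdel HQ]].
  exists (mkposreal _ Hdel). intros k Hk0 Hk. simpl in Hk.
  unfold dd1r. destruct (Req_EM_T (z + k) z). lra. destruct (Req_EM_T z z); [|congruence].
  replace (z + k - z) with k by ring.
  replace ((((h (z + k) - h z) / k) - Derive h z) / k) with
    ((h (z + k) - h z - h1 z * k) / k ^ 2) by (unfold h1; field; auto).
  apply HQ; auto.
Qed.

Lemma g_der z y : is_derive (fun w => dd1r h w z) y (Dg y z).
Proof.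
  unfold Dg. destruct (Req_EM_T y z). subst. apply g_der_eq. apply g_der_ne; auto.
Qed.

Lemma g_cont z y : continuous (fun w => dd1r h w z) y.
Proof.
  apply (ex_derive_continuous (K:=R_AbsRing) (V:=R_NormedModule)). eexists. apply g_der.
Qed.

Lemma dd1r_sym w z : dd1r h w z = dd1r h z w.
Proof.
  unfold dd1r. destruct (Req_EM_T w z); destruct (Req_EM_T z w); subst; try congruence.
  field. lra.
Qed.

Lemma dd2r_diag x z : dd2r h x x z = Dg x z.
Proof.
  unfold dd2r. destruct (Req_EM_T x x); [|congruence]. apply is_derive_unique. apply g_der.
Qed.

Lemma dd2r_off x y z : x <> y -> dd2r h x y z = (dd1r h x z - dd1r h y z) / (x - y).
Proof. intro. unfold dd2r. destruct (Req_EM_T x y); [congruence| auto]. Qed.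

Lemma dq_lim z y : forall eps, 0 < eps -> exists del, 0 < del /\ forall x, x <> y -> Rabs (x - y) < del ->
  Rabs ((dd1r h x z - dd1r h y z) / (x - y) - Dg y z) < eps.
Proof.
  intros eps He. pose proof (proj1 (is_derive_Reals _ _ _) (g_der z y) eps He) as [del Hd].
  exists del. split. apply cond_pos. intros x Hx Hxd.
  specialize (Hd (x - y) ltac:(lra) Hxd). replace (y + (x - y)) with x in Hd by ring. auto.
Qed.

Lemma cont_x y z x0 : continuous (fun x => dd2r h x y z) x0.
Proof.
  destruct (Req_EM_T x0 y) as [E|NE].
  - subst. apply cont_R_eps. intros eps He. destruct (dq_lim z y eps He) as [del [Hd Hq]].
    exists del. split; auto. intros x Hx. rewrite dd2r_diag.
    destruct (Req_EM_T x y). subst. rewrite dd2r_diag. rewrite Rminus_diag, Rabs_R0. auto.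
    rewrite dd2r_off by auto. apply Hq; auto.
  - apply cR_ext_loc with (fun x => (dd1r h x z - dd1r h y z) / (x - y)).
    + exists (Rabs (x0 - y)). split. apply Rabs_pos_lt; lra. intros x Hx.
      rewrite dd2r_off; auto. intro; subst. rewrite Rabs_minus_sym in Hx. lra.
    + apply cR_div. apply cR_minus. apply g_cont. apply cR_const. apply cR_minus. apply cR_id. apply cR_const.
      lra.
Qed.

Lemma cont_y x z y0 : continuous (fun y => dd2r h x y z) y0.
Proof.
  destruct (Req_EM_T y0 x) as [E|NE].
  - subst. apply cont_R_eps. intros eps He. destruct (dq_lim z x eps He) as [del [Hd Hq]].
    exists del. split; auto. intros y Hy. rewrite dd2r_diag.
    destruct (Req_EM_T y x). subst. rewrite dd2r_diag. rewrite Rminus_diag, Rabs_R0. auto.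
    rewrite dd2r_off by auto.
    replace ((dd1r h x z - dd1r h y z) / (x - y)) with ((dd1r h y z - dd1r h x z) / (y - x)) by (field; lra).
    apply Hq; auto.
  - apply cR_ext_loc with (fun y => (dd1r h y z - dd1r h x z) / (y - x)).
    + exists (Rabs (y0 - x)). split. apply Rabs_pos_lt; lra. intros y Hy.
      assert (x <> y) by (intro; subst; rewrite Rabs_minus_sym in Hy; lra).
      rewrite dd2r_off; auto. field. lra.
    + apply cR_div. apply cR_minus. apply g_cont. apply cR_const. apply cR_minus. apply cR_id. apply cR_const.
      lra.
Qed.

Lemma G_cont x z0 : z0 <> x -> continuous (fun z => G x z) z0.
Proof.
  intro Hz. unfold G. apply cR_div.
  - apply cR_minus. apply cR_mult. apply cR_const. apply cR_minus. apply cR_const. apply cR_id.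
    apply cR_minus. apply cR_const. apply h_cont.
  - apply (cR_ext (fun z => (x - z) * ((x - z) * 1))). intro; simpl; auto.
    apply cR_mult. apply cR_minus. apply cR_const. apply cR_id.
    apply cR_mult. apply cR_minus. apply cR_const. apply cR_id. apply cR_const.
  - apply pow_nonzero. lra.
Qed.

Lemma Dg_cont x z0 : continuous (fun z => Dg x z) z0.
Proof.
  destruct (Req_EM_T z0 x) as [E|NE].
  - subst. apply cont_R_eps. intros eps He. destruct (Q2 x eps He) as [del [Hd HQ]].
    exists del. split; auto. intros z Hz. unfold Dg at 2. destruct (Req_EM_T x x); [|congruence].
    unfold Dg. destruct (Req_EM_T x z). subst. rewrite Rminus_diag, Rabs_R0. auto.
    unfold G. replace ((h1 x * (x - z) - (h x - h z)) / (x - z) ^ 2) with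
      ((h (x + (z - x)) - h x - h1 x * (z - x)) / (z - x) ^ 2).
    apply HQ; auto. lra. replace (x + (z - x)) with z by ring. field. lra.
  - apply cR_ext_loc with (fun z => G x z).
    + exists (Rabs (z0 - x)). split. apply Rabs_pos_lt; lra. intros z Hzz. unfold Dg.
      destruct (Req_EM_T x z); auto. subst. rewrite Rabs_minus_sym in Hzz. lra.
    + apply G_cont; auto.
Qed.

Lemma cont_z x y z0 : continuous (fun z => dd2r h x y z) z0.
Proof.
  destruct (Req_EM_T x y) as [E|NE].
  - subst. apply cR_ext with (fun z => Dg y z). intro. symmetry. apply dd2r_diag. apply Dg_cont.
  - apply cR_ext with (fun z => (dd1r h z x - dd1r h z y) / (x - y)).
    intro z. rewrite dd2r_off by auto. rewrite (dd1r_sym x z), (dd1r_sym y z). auto.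
    apply cR_div. apply cR_minus; apply g_cont. apply cR_const. lra.
Qed.

End Calc.

Lemma Cdiv_R (c : C) (r : R) : r <> 0 -> Cdiv c (RtoC r) = (Re c / r, Im c / r).
Proof. intro. destruct c as [p q]. unfold Cdiv, Cinv, Cmult. simpl. apply injective_projections; simpl; field; auto. Qed.

Lemma dd1_parts f x0 x1 : dd1 f x0 x1 = (dd1r (fun y => Re (f y)) x0 x1, dd1r (fun y => Im (f y)) x0 x1).
Proof.
  unfold dd1, dd1r. destruct (Req_EM_T x0 x1). reflexivity.
  rewrite Cdiv_R by lra. destruct (f x0), (f x1). reflexivity.
Qed.

Lemma dd2_parts f x0 x1 x2 : dd2 f x0 x1 x2 =
  (dd2r (fun y => Re (f y)) x0 x1 x2, dd2r (fun y => Im (f y)) x0 x1 x2).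
Proof.
  unfold dd2, dd2r. destruct (Req_EM_T x0 x1).
  - unfold Cderive. f_equal; apply Derive_ext; intro; rewrite dd1_parts; reflexivity.
  - rewrite Cdiv_R by lra. rewrite !dd1_parts. reflexivity.
Qed.

Lemma Cmod_le_parts (c : C) : Cmod c <= Rabs (Re c) + Rabs (Im c).
Proof.
  destruct c as [p q]. unfold Cmod. simpl.
  apply Rsqr_incr_0_var. rewrite Rsqr_sqrt by nra. unfold Rsqr.
  pose proof (Rabs_pos p). pose proof (Rabs_pos q).
  replace (p * (p * 1) + q * (q * 1)) with (Rabs p * Rabs p + Rabs q * Rabs q).
  nra. rewrite <- !Rabs_mult. rewrite !Rabs_right by nra. ring.
  pose proof (Rabs_pos p). pose proof (Rabs_pos q). lra.
Qed.

Lemma cont_C_parts (g : R -> C) x : continuous (fun y => Re (g y)) x -> continuous (fun y => Im (g y)) x ->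
  continuous g x.
Proof.
  intros Hr Hi. apply cont_C_eps. intros eps He.
  destruct (proj1 (cont_R_eps _ x) Hr (eps/2)) as [d1 [Hd1 H1]]. lra.
  destruct (proj1 (cont_R_eps _ x) Hi (eps/2)) as [d2 [Hd2 H2]]. lra.
  exists (Rmin d1 d2). split. apply Rmin_pos; auto. intros y Hy.
  pose proof (Rmin_l d1 d2). pose proof (Rmin_r d1 d2).
  specialize (H1 y ltac:(lra)). specialize (H2 y ltac:(lra)).
  eapply Rle_lt_trans. apply Cmod_le_parts.
  replace (Re (Cminus (g y) (g x))) with (Re (g y) - Re (g x)) by (destruct (g y), (g x); simpl; ring).
  replace (Im (Cminus (g y) (g x))) with (Im (g y) - Im (g x)) by (destruct (g y), (g x); simpl; ring).
  lra.
Qed.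

Lemma sep_cont_dd2 f : C2C f -> sep_continuous (dd2 f).
Proof.
  intros [Hr Hi]. split; [|split].
  - intros t u s. apply cont_C_parts.
    + apply cR_ext with (fun y => dd2r (fun y => Re (f y)) y t u). intro; rewrite dd2_parts; auto.
      apply cont_x; auto.
    + apply cR_ext with (fun y => dd2r (fun y => Im (f y)) y t u). intro; rewrite dd2_parts; auto.
      apply cont_x; auto.
  - intros s u t. apply cont_C_parts.
    + apply cR_ext with (fun y => dd2r (fun y => Re (f y)) s y u). intro; rewrite dd2_parts; auto.
      apply cont_y; auto.
    + apply cR_ext with (fun y => dd2r (fun y => Im (f y)) s y u). intro; rewrite dd2_parts; auto.
      apply cont_y; auto.
  - intros s t u. apply cont_C_parts.
    + apply cR_ext with (fun y => dd2r (fun y => Re (f y)) s t y). intro; rewrite dd2_parts; auto.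
      apply cont_z; auto.
    + apply cR_ext with (fun y => dd2r (fun y => Im (f y)) s t y). intro; rewrite dd2_parts; auto.
      apply cont_z; auto.
Qed.

Definition l2P (x : nat -> C) : Prop := ex_series (fun n => Cmod (x n) ^ 2).
Definition L2 := {x : nat -> C | l2P x}.
Definition lv (x : L2) : nat -> C := proj1_sig x.

Lemma l2_eq (x y : L2) : (forall n, lv x n = lv y n) -> x = y.
Proof.
  destruct x as [x Hx], y as [y Hy]. simpl. intro E.
  assert (x = y) by (apply functional_extensionality; auto). subst.
  f_equal. apply proof_irrelevance.
Qed.

Lemma exs_le (a b : nat -> R) : (forall n, 0 <= a n <= b n) -> ex_series b -> ex_series a.
Proof.
  intros Hab Hb. apply (ex_series_le (K:=R_AbsRing) (V:=R_CompleteNormedModule) a b); auto.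
  intro n. change (norm (a n)) with (Rabs (a n)). rewrite Rabs_right by (destruct (Hab n); lra). apply Hab.
Qed.

Lemma exs_plus (a b : nat -> R) : ex_series a -> ex_series b -> ex_series (fun n => a n + b n).
Proof. intros. apply (ex_series_plus (K:=R_AbsRing) (V:=R_NormedModule) a b); auto. Qed.

Lemma exs_scal (c : R) (a : nat -> R) : ex_series a -> ex_series (fun n => c * a n).
Proof. intros. apply (ex_series_scal (K:=R_AbsRing) (V:=R_NormedModule) c a); auto. Qed.

Lemma exs_zero : ex_series (fun _ : nat => 0).
Proof.
  assert (Hb : forall N, rsum (fun _ => 0) N <= 0) by (intro N; induction N; simpl; lra).
  destruct (rser_bound (fun _ => 0) 0 (fun _ => Rle_refl 0) Hb) as [A _]. exact A.
Qed.

Lemma Cmod_plus_sq (a b : C) : Cmod (Cplus a b) ^ 2 <= 2 * Cmod a ^ 2 + 2 * Cmod b ^ 2.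
Proof.
  pose proof (Cmod_triangle a b). pose proof (Cmod_ge_0 (Cplus a b)).
  pose proof (Cmod_ge_0 a). pose proof (Cmod_ge_0 b).
  assert (Cmod (Cplus a b) ^ 2 <= (Cmod a + Cmod b) ^ 2) by (apply pow_incr; lra).
  pose proof (pow2_ge_0 (Cmod a - Cmod b)). nra.
Qed.

Lemma l2P_plus x y : l2P x -> l2P y -> l2P (fun n => Cplus (x n) (y n)).
Proof.
  intros Hx Hy. apply exs_le with (fun n => 2 * Cmod (x n) ^ 2 + 2 * Cmod (y n) ^ 2).
  intro n. split. apply pow2_ge_0. apply Cmod_plus_sq.
  apply exs_plus; apply exs_scal; auto.
Qed.

Lemma l2P_scal c x : l2P x -> l2P (fun n => Cmult c (x n)).
Proof.
  intro Hx. apply ex_series_ext with (fun n => Cmod c ^ 2 * Cmod (x n) ^ 2).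
  intro n. rewrite Cmod_mult, Rpow_mult_distr. reflexivity. apply exs_scal; auto.
Qed.

Lemma l2P_zero : l2P (fun _ => RtoC 0).
Proof. apply ex_series_ext with (fun _ => 0). intro. rewrite Cmod_0. simpl. symmetry. apply Rmult_0_l. apply exs_zero. Qed.

Definition l2plus (x y : L2) : L2 :=
  exist _ (fun n => Cplus (lv x n) (lv y n)) (l2P_plus _ _ (proj2_sig x) (proj2_sig y)).
Definition l2zero : L2 := exist _ (fun _ => RtoC 0) l2P_zero.
Definition l2scal (c : C) (x : L2) : L2 :=
  exist _ (fun n => Cmult c (lv x n)) (l2P_scal c _ (proj2_sig x)).
Definition l2opp (x : L2) : L2 := l2scal (Copp (RtoC 1)) x.

Lemma l2_ax1 x y : l2plus x y = l2plus y x.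
Proof. apply l2_eq. intro. simpl. ring. Qed.
Lemma l2_ax2 x y z : l2plus x (l2plus y z) = l2plus (l2plus x y) z.
Proof. apply l2_eq. intro. simpl. ring. Qed.
Lemma l2_ax3 x : l2plus x l2zero = x.
Proof. apply l2_eq. intro. simpl. ring. Qed.

Definition L2_AbelianMonoid_mixin := AbelianMonoid.Mixin L2 l2plus l2zero l2_ax1 l2_ax2 l2_ax3.
Canonical L2_AbelianMonoid := AbelianMonoid.Pack L2 L2_AbelianMonoid_mixin L2.

Lemma l2_opp_ax (x : L2) : plus x (l2opp x) = zero.
Proof. apply l2_eq. intro. simpl. ring. Qed.

Definition L2_AbelianGroup_mixin := AbelianGroup.Mixin L2_AbelianMonoid l2opp l2_opp_ax.
Canonical L2_AbelianGroup := AbelianGroup.Pack L2 (AbelianGroup.Class _ L2_AbelianMonoid_mixin L2_AbelianGroup_mixin) L2.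

Lemma l2_m1 (x y : C) (u : L2) : l2scal x (l2scal y u) = l2scal (mult x y) u.
Proof. apply l2_eq. intro. simpl. change (mult x y) with (Cmult x y). ring. Qed.
Lemma l2_m2 (u : L2) : l2scal one u = u.
Proof. apply l2_eq. intro. simpl. change (@one C_Ring) with (RtoC 1). ring. Qed.
Lemma l2_m3 (x : C) (u v : L2) : l2scal x (plus u v) = plus (l2scal x u) (l2scal x v).
Proof. apply l2_eq. intro. simpl. ring. Qed.
Lemma l2_m4 (x y : C) (u : L2) : l2scal (plus x y) u = plus (l2scal x u) (l2scal y u).
Proof. apply l2_eq. intro. simpl. change (plus x y) with (Cplus x y). ring. Qed.

Definition L2_ModuleSpace_mixin := ModuleSpace.Mixin C_Ring L2_AbelianGroup l2scal l2_m1 l2_m2 l2_m3 l2_m4.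
Canonical L2_ModuleSpace := ModuleSpace.Pack C_Ring L2
  (ModuleSpace.Class C_Ring L2 (AbelianGroup.Class _ L2_AbelianMonoid_mixin L2_AbelianGroup_mixin) L2_ModuleSpace_mixin) L2.

Lemma lv_plus (x y : L2_ModuleSpace) n : lv (plus x y) n = Cplus (lv x n) (lv y n).
Proof. reflexivity. Qed.
Lemma lv_scal (c : C) (x : L2_ModuleSpace) n : lv (scal c x) n = Cmult c (lv x n).
Proof. reflexivity. Qed.
Lemma lv_minus (x y : L2_ModuleSpace) n : lv (minus x y) n = Cminus (lv x n) (lv y n).
Proof. simpl. ring. Qed.
Lemma lv_zero n : lv (zero : L2_ModuleSpace) n = RtoC 0.
Proof. reflexivity. Qed.

Definition l2f (x y : L2) (n : nat) : C := Cmult (lv x n) (Cconj (lv y n)).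

Lemma Cmod_prod_le (a b : C) : Cmod (Cmult a (Cconj b)) <= (Cmod a ^ 2 + Cmod b ^ 2) / 2.
Proof.
  rewrite Cmod_mult, Cmod_conj. pose proof (pow2_ge_0 (Cmod a - Cmod b)). nra.
Qed.

Lemma Im_le_Cmod (c : C) : Rabs (Im c) <= Cmod c.
Proof.
  destruct c as [p q]. unfold Cmod. simpl. rewrite <- sqrt_Rsqr_abs. apply sqrt_le_1_alt.
  unfold Rsqr. nra.
Qed.

Lemma l2f_bound x y : ex_series (fun n => (Cmod (lv x n) ^ 2 + Cmod (lv y n) ^ 2) / 2).
Proof.
  apply ex_series_ext with (fun n => / 2 * (Cmod (lv x n) ^ 2 + Cmod (lv y n) ^ 2)).
  intro; unfold Rdiv; simpl; apply Rmult_comm.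
  apply exs_scal. apply exs_plus. apply (proj2_sig x). apply (proj2_sig y).
Qed.

Lemma exs_abs_le (a : nat -> R) (b : nat -> R) : (forall n, Rabs (a n) <= b n) -> ex_series b -> ex_series a.
Proof.
  intros Hab Hb. apply (ex_series_le (K:=R_AbsRing) (V:=R_CompleteNormedModule) a b); auto.
Qed.

Lemma l2f_re x y : ex_series (fun n => Re (l2f x y n)).
Proof.
  apply exs_abs_le with (fun n => (Cmod (lv x n) ^ 2 + Cmod (lv y n) ^ 2) / 2).
  intro n. eapply Rle_trans. apply re_le_Cmod. apply Cmod_prod_le. apply l2f_bound.
Qed.
Lemma l2f_im x y : ex_series (fun n => Im (l2f x y n)).
Proof.
  apply exs_abs_le with (fun n => (Cmod (lv x n) ^ 2 + Cmod (lv y n) ^ 2) / 2).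
  intro n. eapply Rle_trans. apply Im_le_Cmod. apply Cmod_prod_le. apply l2f_bound.
Qed.

Definition l2ip (x y : L2_ModuleSpace) : C :=
  (Series (fun n => Re (l2f x y n)), Series (fun n => Im (l2f x y n))).

Lemma l2ip_addl (x y z : L2_ModuleSpace) : l2ip (plus x y) z = Cplus (l2ip x z) (l2ip y z).
Proof.
  unfold l2ip. apply injective_projections; simpl.
  - rewrite <- Series_plus by (apply l2f_re). apply Series_ext. intro n. unfold l2f. simpl. ring.
  - rewrite <- Series_plus by (apply l2f_im). apply Series_ext. intro n. unfold l2f. simpl. ring.
Qed.

Lemma l2ip_scall (a : C) (x y : L2_ModuleSpace) : l2ip (scal a x) y = Cmult a (l2ip x y).
Proof.
  unfold l2ip. destruct a as [ar ai]. apply injective_projections; simpl.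
  - rewrite <- !Series_scal_l, <- Series_minus.
    apply Series_ext. intro n. unfold l2f. simpl. ring.
    apply exs_scal, l2f_re. apply exs_scal, l2f_im.
  - rewrite <- !Series_scal_l, <- Series_plus.
    apply Series_ext. intro n. unfold l2f. simpl. ring.
    apply exs_scal, l2f_im. apply exs_scal, l2f_re.
Qed.

Lemma l2ip_sym (x y : L2_ModuleSpace) : l2ip y x = Cconj (l2ip x y).
Proof.
  unfold l2ip, Cconj. apply injective_projections; simpl.
  - apply Series_ext. intro n. unfold l2f. simpl. ring.
  - rewrite <- Series_opp. apply Series_ext. intro n. unfold l2f. simpl. ring.
Qed.

Lemma l2f_self x n : Re (l2f x x n) = Cmod (lv x n) ^ 2.
Proof. unfold l2f. rewrite Cmod2_alt. destruct (lv x n). simpl. ring. Qed.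

Lemma l2ip_re_self (x : L2_ModuleSpace) : Re (l2ip x x) = Series (fun n => Cmod (lv x n) ^ 2).
Proof. unfold l2ip. simpl. apply Series_ext. intro. apply l2f_self. Qed.

Lemma Series_nonneg (a : nat -> R) : (forall n, 0 <= a n) -> ex_series a -> 0 <= Series a.
Proof.
  intros Hp Hs. pose proof (rser_partial_le a 0 Hp Hs). simpl in H. auto.
Qed.

Lemma l2ip_pos (x : L2_ModuleSpace) : 0 <= Re (l2ip x x).
Proof. rewrite l2ip_re_self. apply Series_nonneg. intro; apply pow2_ge_0. apply (proj2_sig x). Qed.

Lemma l2ip_def (x : L2_ModuleSpace) : l2ip x x = RtoC 0 -> x = zero.
Proof.
  intro E. assert (S0 : Series (fun n => Cmod (lv x n) ^ 2) = 0).
  { rewrite <- l2ip_re_self, E. reflexivity. }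
  apply l2_eq. intro n. rewrite lv_zero.
  pose proof (rser_partial_le (fun n => Cmod (lv x n) ^ 2) (S n) (fun _ => pow2_ge_0 _) (proj2_sig x)).
  rewrite S0 in H.
  change (rsum (fun n => Cmod (lv x n) ^ 2) (S n)) with (rsum (fun n => Cmod (lv x n) ^ 2) n + Cmod (lv x n) ^ 2) in H.
  pose proof (rsum_nonneg (fun n => Cmod (lv x n) ^ 2) n (fun _ => pow2_ge_0 _)).
  apply Cmod_eq_0. pose proof (Cmod_ge_0 (lv x n)).
  assert (Cmod (lv x n) ^ 2 <= 0) by lra. nra.
Qed.

Lemma l2_nrm_sq (x : L2_ModuleSpace) : sqrt (Re (l2ip x x)) ^ 2 = Series (fun n => Cmod (lv x n) ^ 2).
Proof. rewrite pow2_sqrt by apply l2ip_pos. apply l2ip_re_self. Qed.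

Lemma Cmod_diff_sq (a b c : C) : Cmod (Cminus a c) ^ 2 <= 2 * Cmod (Cminus a b) ^ 2 + 2 * Cmod (Cminus b c) ^ 2.
Proof.
  replace (Cminus a c) with (Cplus (Cminus a b) (Cminus b c)) by ring. apply Cmod_plus_sq.
Qed.

Lemma l2_complete (u : nat -> L2_ModuleSpace) :
  (forall eps, 0 < eps -> exists N : nat, forall m n, (N <= m)%nat -> (N <= n)%nat ->
          sqrt (Re (l2ip (minus (u m) (u n)) (minus (u m) (u n)))) < eps) ->
  exists l : L2_ModuleSpace, forall eps, 0 < eps -> exists N : nat, forall n, (N <= n)%nat ->
          sqrt (Re (l2ip (minus (u n) l) (minus (u n) l))) < eps.
Proof.
  intro Hc.
  assert (Hc2 : forall eps, 0 < eps -> exists N, forall m n, (N <= m)%nat -> (N <= n)%nat ->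
            Series (fun j => Cmod (Cminus (lv (u m) j) (lv (u n) j)) ^ 2) < eps ^ 2).
  { intros eps He. destruct (Hc eps He) as [N HN]. exists N. intros m n Hm Hn.
    specialize (HN m n Hm Hn). rewrite <- (Series_ext (fun j => Cmod (lv (minus (u m) (u n)) j) ^ 2)).
    rewrite <- l2_nrm_sq. pose proof (sqrt_pos (Re (l2ip (minus (u m) (u n)) (minus (u m) (u n))))).
    nra. intro j. rewrite lv_minus. auto. }
  assert (Hcoord : forall m n j, Cmod (Cminus (lv (u m) j) (lv (u n) j)) ^ 2 <=
            Series (fun j => Cmod (Cminus (lv (u m) j) (lv (u n) j)) ^ 2)).
  { intros m n j. eapply Rle_trans. 2: apply rser_partial_le with (N := S j).
    change (rsum (fun j => Cmod (Cminus (lv (u m) j) (lv (u n) j)) ^ 2) (S j)) with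
      (rsum (fun j => Cmod (Cminus (lv (u m) j) (lv (u n) j)) ^ 2) j + Cmod (Cminus (lv (u m) j) (lv (u n) j)) ^ 2).
    pose proof (rsum_nonneg (fun j => Cmod (Cminus (lv (u m) j) (lv (u n) j)) ^ 2) j (fun _ => pow2_ge_0 _)). lra.
    intro; apply pow2_ge_0.
    apply ex_series_ext with (fun j => Cmod (lv (minus (u m) (u n)) j) ^ 2).
    intro. rewrite lv_minus. auto. apply (proj2_sig (minus (u m) (u n))). }
  assert (CauRe : forall j, Cauchy_crit (fun m => Re (lv (u m) j))).
  { intros j eps He. destruct (Hc2 eps He) as [N HN]. exists N. intros m n Hm Hn.
    unfold R_dist. specialize (HN m n Hm Hn). pose proof (Hcoord m n j).
    pose proof (re_le_Cmod (Cminus (lv (u m) j) (lv (u n) j))).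
    replace (Re (lv (u m) j) - Re (lv (u n) j)) with (Re (Cminus (lv (u m) j) (lv (u n) j))) by (unfold Re, Im; simpl; ring).
    pose proof (Cmod_ge_0 (Cminus (lv (u m) j) (lv (u n) j))).
    assert (Cmod (Cminus (lv (u m) j) (lv (u n) j)) < eps) by (apply Rnot_le_lt; intro; nra). lra. }
  assert (CauIm : forall j, Cauchy_crit (fun m => Im (lv (u m) j))).
  { intros j eps He. destruct (Hc2 eps He) as [N HN]. exists N. intros m n Hm Hn.
    unfold R_dist. specialize (HN m n Hm Hn). pose proof (Hcoord m n j).
    pose proof (Im_le_Cmod (Cminus (lv (u m) j) (lv (u n) j))).
    replace (Im (lv (u m) j) - Im (lv (u n) j)) with (Im (Cminus (lv (u m) j) (lv (u n) j))) by (unfold Re, Im; simpl; ring).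
    pose proof (Cmod_ge_0 (Cminus (lv (u m) j) (lv (u n) j))).
    assert (Cmod (Cminus (lv (u m) j) (lv (u n) j)) < eps) by (apply Rnot_le_lt; intro; nra). lra. }
  set (lr := fun j => proj1_sig (Rcomplete.R_complete _ (CauRe j))).
  set (li := fun j => proj1_sig (Rcomplete.R_complete _ (CauIm j))).
  set (l := fun j => (lr j, li j) : C).
  assert (Hconv : forall j eps, 0 < eps -> exists m0, forall m, (m0 <= m)%nat -> Cmod (Cminus (lv (u m) j) (l j)) < eps).
  { intros j eps He.
    pose proof (proj2_sig (Rcomplete.R_complete _ (CauRe j))) as Cr. fold (lr j) in Cr.
    pose proof (proj2_sig (Rcomplete.R_complete _ (CauIm j))) as Ci. fold (li j) in Ci.
    destruct (Cr (eps/2)) as [N1 H1]. lra. destruct (Ci (eps/2)) as [N2 H2]. lra.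
    exists (Nat.max N1 N2). intros m Hm.
    specialize (H1 m ltac:(lia)). specialize (H2 m ltac:(lia)). unfold R_dist in *.
    eapply Rle_lt_trans. apply Cmod_le_parts.
    replace (Re (Cminus (lv (u m) j) (l j))) with (Re (lv (u m) j) - lr j) by (unfold l, Re; simpl; ring).
    replace (Im (Cminus (lv (u m) j) (l j))) with (Im (lv (u m) j) - li j) by (unfold l, Im; simpl; ring). lra. }
  assert (Hfin : forall M del, 0 < del -> exists m0, forall m, (m0 <= m)%nat ->
            rsum (fun j => Cmod (Cminus (lv (u m) j) (l j)) ^ 2) M < del).
  { induction M; intros del Hdel.
    - exists O. intros. simpl. auto.
    - destruct (IHM (del/2)) as [m1 Hm1]. lra.
      destruct (Hconv M (sqrt (del/2))) as [m2 Hm2]. apply sqrt_lt_R0; lra.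
      exists (Nat.max m1 m2). intros m Hm. cbn [rsum].
      specialize (Hm1 m ltac:(lia)). specialize (Hm2 m ltac:(lia)).
      assert (Cmod (Cminus (lv (u m) M) (l M)) ^ 2 < del / 2).
      { pose proof (Cmod_ge_0 (Cminus (lv (u m) M) (l M))).
        assert (Hs : sqrt (del/2) ^ 2 = del/2) by (apply pow2_sqrt; lra).
        pose proof (sqrt_pos (del/2)). nra. }
      lra. }
  assert (Hlin : forall (f g : nat -> R) M, rsum (fun j => 2 * f j + 2 * g j) M = 2 * rsum f M + 2 * rsum g M).
  { intros f g M. induction M; simpl. ring. rewrite IHM. ring. }
  assert (Hexd : forall m n, ex_series (fun j => Cmod (Cminus (lv (u m) j) (lv (u n) j)) ^ 2)).
  { intros m n. apply ex_series_ext with (fun j => Cmod (lv (minus (u m) (u n)) j) ^ 2).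
    intro. rewrite lv_minus. auto. apply (proj2_sig (minus (u m) (u n))). }
  assert (Hbound : forall eps, 0 < eps -> exists N, forall k M, (N <= k)%nat ->
            rsum (fun j => Cmod (Cminus (lv (u k) j) (l j)) ^ 2) M <= 2 * eps ^ 2).
  { intros eps He. destruct (Hc2 eps He) as [N HN]. exists N. intros k M Hk.
    apply Rnot_lt_le. intro Hlt.
    set (del := (rsum (fun j => Cmod (Cminus (lv (u k) j) (l j)) ^ 2) M - 2 * eps ^ 2) / 2).
    destruct (Hfin M del) as [m0 Hm0]. unfold del; lra.
    set (m := Nat.max N m0).
    specialize (Hm0 m ltac:(unfold m; lia)). specialize (HN k m Hk ltac:(unfold m; lia)).
    assert (rsum (fun j => Cmod (Cminus (lv (u k) j) (l j)) ^ 2) M <=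
            2 * rsum (fun j => Cmod (Cminus (lv (u k) j) (lv (u m) j)) ^ 2) M +
            2 * rsum (fun j => Cmod (Cminus (lv (u m) j) (l j)) ^ 2) M).
    { rewrite <- Hlin. apply rsum_le. intros j _. apply Cmod_diff_sq. }
    pose proof (rser_partial_le _ M (fun _ => pow2_ge_0 _) (Hexd k m)).
    unfold del in Hm0. lra. }
  assert (Hl2 : l2P l).
  { destruct (Hbound 1) as [N HN]. lra.
    destruct (rser_bound (fun j => Cmod (Cminus (lv (u N) j) (l j)) ^ 2) (2 * 1 ^ 2)) as [Hex _].
    intro; apply pow2_ge_0. intro M. apply HN. lia.
    apply exs_le with (fun j => 2 * Cmod (Cminus (lv (u N) j) (l j)) ^ 2 + 2 * Cmod (lv (u N) j) ^ 2).
    intro j. split. apply pow2_ge_0.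
    replace (l j) with (Cplus (Copp (Cminus (lv (u N) j) (l j))) (lv (u N) j)) at 1 by ring.
    eapply Rle_trans. apply Cmod_plus_sq. rewrite Cmod_opp. lra.
    apply exs_plus; apply exs_scal; auto. apply (proj2_sig (u N)). }
  exists (exist _ l Hl2 : L2_ModuleSpace).
  intros eps He. destruct (Hbound (eps / 2)) as [N HN]. lra.
  exists N. intros n Hn.
  set (x := minus (u n) (exist _ l Hl2 : L2_ModuleSpace)).
  assert (Hs : Series (fun j => Cmod (lv x j) ^ 2) <= 2 * (eps / 2) ^ 2).
  { destruct (rser_bound (fun j => Cmod (lv x j) ^ 2) (2 * (eps / 2) ^ 2)) as [_ B].
    intro; apply pow2_ge_0. intro M. unfold x.
    rewrite (rsum_ext _ (fun j => Cmod (Cminus (lv (u n) j) (l j)) ^ 2)). apply HN; auto.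
    intros j _. rewrite lv_minus. auto. auto. }
  rewrite <- l2_nrm_sq in Hs.
  pose proof (sqrt_pos (Re (l2ip x x))).
  assert (sqrt (Re (l2ip x x)) ^ 2 < eps ^ 2) by nra.
  nra.
Qed.

Definition L2H : Hilbert := {|
  hcar := L2_ModuleSpace;
  hinner := l2ip;
  hinner_addl := l2ip_addl;
  hinner_scall := l2ip_scall;
  hinner_sym := l2ip_sym;
  hinner_pos := l2ip_pos;
  hinner_def := l2ip_def;
  hcomplete := l2_complete |}.

Lemma L2H_nrm_sq (x : L2H) : hnorm L2H x ^ 2 = Series (fun n => Cmod (lv x n) ^ 2).
Proof. unfold hnorm. apply l2_nrm_sq. Qed.

Definition qC (k : nat) : C := let (p, r) := Cantor.of_nat k in (dseq p, dseq r).

Lemma qC_dense (z : C) (eps : R) : 0 < eps -> exists k, Cmod (Cminus z (qC k)) < eps.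
Proof.
  intro He. destruct (dseq_dense (Re z) (eps/2)) as [p Hp]. lra.
  destruct (dseq_dense (Im z) (eps/2)) as [r Hr]. lra.
  exists (Cantor.to_nat (p, r)). unfold qC. rewrite Cantor.cancel_of_to.
  eapply Rle_lt_trans. apply Cmod_le_parts.
  replace (Re (Cminus z (dseq p, dseq r))) with (- (dseq p - Re z)) by (unfold Re; destruct z; simpl; ring).
  replace (Im (Cminus z (dseq p, dseq r))) with (- (dseq r - Im z)) by (unfold Im; destruct z; simpl; ring).
  rewrite !Rabs_Ropp. lra.
Qed.

Fixpoint dec (j m : nat) : nat :=
  match m with O => fst (Cantor.of_nat j) | S m => dec (snd (Cantor.of_nat j)) m end.

Lemma dec_surj N : forall c : nat -> nat, exists j, forall m, (m <= N)%nat -> dec j m = c m.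
Proof.
  induction N; intros c.
  - exists (Cantor.to_nat (c O, O)). intros m Hm. destruct m; [|lia]. cbn [dec]. rewrite Cantor.cancel_of_to. auto.
  - destruct (IHN (fun m => c (S m))) as [j' Hj'].
    exists (Cantor.to_nat (c O, j')). intros m Hm. destruct m; cbn [dec]; rewrite Cantor.cancel_of_to; cbn [fst snd]; auto.
    apply Hj'. lia.
Qed.

Definition Dfun (k : nat) : nat -> C :=
  let (N, j) := Cantor.of_nat k in fun m => if Nat.leb m N then qC (dec j m) else RtoC 0.

Lemma Dfun_l2 k : l2P (Dfun k).
Proof.
  unfold l2P. unfold Dfun. destruct (Cantor.of_nat k) as [N j].
  set (f := fun m => Cmod (if Nat.leb m N then qC (dec j m) else RtoC 0) ^ 2).
  assert (Hz : forall m, (S N <= m)%nat -> f m = 0).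
  { intros m Hm. unfold f. assert (Nat.leb m N = false) by (apply Nat.leb_gt; lia). rewrite H.
    rewrite Cmod_0. ring. }
  destruct (rser_bound f (rsum f (S N))) as [A _]. intro; apply pow2_ge_0.
  intro M. destruct (Nat.le_ge_cases M (S N)) as [H|H].
  - apply rsum_mono; auto. intro; apply pow2_ge_0.
  - right. induction H as [|m Hm IH]; auto. change (rsum f (S m)) with (rsum f m + f m). rewrite IH, Hz by lia. ring.
  - exact A.
Qed.

Definition Dv (k : nat) : L2H := exist _ (Dfun k) (Dfun_l2 k).

Lemma rsum_const_le (c : R) N M : 0 <= c ->
  rsum (fun m => if Nat.leb m N then c else 0) M <= INR (S N) * c.
Proof.
  intro Hc.
  assert (E : forall M, (M <= S N)%nat -> rsum (fun m => if Nat.leb m N then c else 0) M = INR M * c).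
  { induction M0; intros HM. simpl. ring. change (rsum (fun m => if Nat.leb m N then c else 0) (S M0)) with
      (rsum (fun m => if Nat.leb m N then c else 0) M0 + (if Nat.leb M0 N then c else 0)).
    rewrite IHM0 by lia. assert (Nat.leb M0 N = true) by (apply Nat.leb_le; lia). rewrite H. rewrite S_INR. ring. }
  destruct (Nat.le_ge_cases M (S N)) as [H|H].
  - rewrite E by auto. apply Rmult_le_compat_r; auto. apply le_INR; auto.
  - rewrite <- (E (S N)) by auto. right. induction H as [|m Hm IH]; auto.
    change (rsum (fun m => if Nat.leb m N then c else 0) (S m)) with
      (rsum (fun m => if Nat.leb m N then c else 0) m + (if Nat.leb m N then c else 0)).
    rewrite IH. assert (Nat.leb m N = false) by (apply Nat.leb_gt; lia). rewrite H. ring.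
Qed.

Lemma rsum_split2 (f g : nat -> R) M : rsum (fun m => f m + g m) M = rsum f M + rsum g M.
Proof. induction M; simpl. ring. rewrite IHM. ring. Qed.

Lemma L2H_separable : separable L2H.
Proof.
  exists Dv. intros x eps He.
  set (f := fun m => Cmod (lv x m) ^ 2).
  assert (Hf : forall m, 0 <= f m) by (intro; apply pow2_ge_0).
  assert (Hx : ex_series f) by apply (proj2_sig x).
  set (Sx := Series f).
  destruct (proj1 (is_series_R_eps f Sx) (Series_correct f Hx) (eps ^ 2 / 2)) as [N HN].
  { pose proof (pow_lt eps 2 He). lra. }
  specialize (HN N (le_n N)). rewrite sum_n_rsum in HN.
  pose proof (rser_partial_le f (Datatypes.S N) Hf Hx) as HpS. fold Sx in HpS.
  assert (HT : Sx - rsum f (Datatypes.S N) < eps ^ 2 / 2) by (apply Rabs_def2 in HN; lra).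
  assert (HSN : 0 < INR (Datatypes.S N)) by (apply lt_0_INR; lia).
  set (eta := eps / (2 * sqrt (INR (Datatypes.S N)))).
  assert (Heta : 0 < eta) by (unfold eta; apply Rdiv_lt_0_compat; [lra| apply Rmult_lt_0_compat; [lra| apply sqrt_lt_R0; lra]]).
  assert (Heta2 : INR (Datatypes.S N) * eta ^ 2 = eps ^ 2 / 4).
  { unfold eta. unfold Rdiv. rewrite Rpow_mult_distr, pow_inv, Rpow_mult_distr, pow2_sqrt by lra.
    field. lra. }
  assert (Hch : forall m, exists k, Cmod (Cminus (lv x m) (qC k)) < eta) by (intro; apply qC_dense; auto).
  set (cf := fun m => proj1_sig (constructive_indefinite_description _ (Hch m))).
  assert (Hcf : forall m, Cmod (Cminus (lv x m) (qC (cf m))) < eta).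
  { intro m. unfold cf. destruct (constructive_indefinite_description _ (Hch m)). auto. }
  destruct (dec_surj N cf) as [j Hj].
  exists (Cantor.to_nat (N, j)).
  set (y := minus x (Dv (Cantor.to_nat (N, j)))).
  assert (Hy : forall m, lv y m = Cminus (lv x m) (if Nat.leb m N then qC (dec j m) else RtoC 0)).
  { intro m. unfold y. rewrite lv_minus. change (lv (Dv (Cantor.to_nat (N, j))) m) with (Dfun (Cantor.to_nat (N, j)) m).
    unfold Dfun. rewrite Cantor.cancel_of_to. auto. }
  assert (Hpt : forall m, Cmod (lv y m) ^ 2 <= (if Nat.leb m N then eta ^ 2 else 0) +
                   (if Nat.leb (Datatypes.S N) m then f m else 0)).
  { intro m. rewrite Hy. destruct (Nat.leb_spec m N).
    - assert (Nat.leb (Datatypes.S N) m = false) by (apply Nat.leb_gt; lia). rewrite H0.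
      rewrite Hj by auto. pose proof (Hcf m). pose proof (Cmod_ge_0 (Cminus (lv x m) (qC (cf m)))).
      assert (Cmod (Cminus (lv x m) (qC (cf m))) ^ 2 <= eta ^ 2) by (apply pow_incr; lra). lra.
    - assert (Nat.leb (Datatypes.S N) m = true) by (apply Nat.leb_le; lia). rewrite H0.
      replace (Cminus (lv x m) (RtoC 0)) with (lv x m) by ring. unfold f. lra. }
  assert (Hbd : forall M, rsum (fun m => Cmod (lv y m) ^ 2) M <= eps ^ 2 / 4 + (Sx - rsum f (Datatypes.S N))).
  { intro M. eapply Rle_trans. apply rsum_le. intros m _. apply Hpt.
    rewrite rsum_split2. apply Rplus_le_compat.
    - rewrite <- Heta2. apply rsum_const_le. apply pow2_ge_0.
    - destruct (Nat.le_ge_cases (Datatypes.S N) M) as [H|H].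
      + rewrite rsum_tail by auto. pose proof (rser_partial_le f M Hf Hx). fold Sx in H0. lra.
      + rewrite (rsum_ext _ (fun _ => 0)). assert (rsum (fun _ : nat => 0) M = 0) by (clear; induction M; simpl; lra).
        rewrite H0. lra. intros m Hm. assert (Nat.leb (Datatypes.S N) m = false) by (apply Nat.leb_gt; lia).
        rewrite H0. auto. }
  destruct (rser_bound _ _ (fun m => pow2_ge_0 (Cmod (lv y m))) Hbd) as [_ HB].
  rewrite <- L2H_nrm_sq in HB.
  pose proof (nrm_ge0 L2H y). fold y.
  assert (hnorm L2H y ^ 2 < eps ^ 2) by lra. nra.
Qed.

Lemma borel_ext (A B : R * R -> Prop) : (forall p, A p <-> B p) -> borel2 A -> borel2 B.
Proof.
  intros E HA. assert (A = B) by (apply functional_extensionality; intro p; apply propositional_extensionality; auto).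
  subst; auto.
Qed.

Lemma borel_empty : borel2 (fun _ => False).
Proof. intros S [H0 _] _. auto. Qed.

Lemma borel_compl A : borel2 A -> borel2 (fun p => ~ A p).
Proof. intros HA S HS HO. destruct HS as [H0 [Hc Hu]]. apply Hc. apply HA; auto. split; auto. Qed.

Lemma borel_union (A : nat -> R * R -> Prop) : (forall n, borel2 (A n)) -> borel2 (fun p => exists n, A n p).
Proof. intros HA S HS HO. destruct HS as [H0 [Hc Hu]]. apply Hu. intro n. apply HA; auto. split; auto. Qed.

Lemma borel_open (O : R * R -> Prop) : open O -> borel2 O.
Proof. intros HO S _ HS. auto. Qed.

Lemma borel_inter (A : nat -> R * R -> Prop) : (forall n, borel2 (A n)) -> borel2 (fun p => forall n, A n p).
Proof.
  intro HA. apply borel_ext with (fun p => ~ exists n, ~ A n p).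
  - intro p. split.
    + intros Hn n. apply NNPP. intro Hc. apply Hn. exists n. auto.
    + intros Ha [n Hn]. auto.
  - apply borel_compl. apply borel_union. intro n. apply borel_compl. auto.
Qed.

Lemma borel_le_cont (G : R * R -> R) (c : R) : (forall p, continuous G p) -> borel2 (fun p => G p <= c).
Proof.
  intro HG. apply borel_ext with (fun p => ~ (c < G p)).
  - intro p. split; intro; lra.
  - apply borel_compl. apply borel_open. apply (open_comp G (fun y => c < y)).
    intros; apply HG. apply open_gt.
Qed.

Lemma borel_lim_le (Gk : nat -> R * R -> R) (F : R * R -> R) (c : R) :
  (forall k p, continuous (Gk k) p) ->
  (forall p eps, 0 < eps -> exists K, forall k, (K <= k)%nat -> Rabs (Gk k p - F p) < eps) ->
  borel2 (fun p => F p <= c).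
Proof.
  intros HG Hlim.
  apply borel_ext with (fun p => forall i : nat, exists K : nat, forall n : nat, Gk (K + n)%nat p <= c + / INR (S i)).
  - intro p. split.
    + intro H. apply Rnot_lt_le. intro Hlt.
      destruct (archimed (/ (F p - c))) as [Ha _].
      assert (Hup : (0 <= up (/ (F p - c)))%Z).
      { apply le_IZR. assert (0 < / (F p - c)) by (apply Rinv_0_lt_compat; lra). lra. }
      set (i := Z.to_nat (up (/ (F p - c)))).
      assert (Hi : / INR (S i) < F p - c).
      { rewrite <- (Rinv_inv (F p - c)). apply Rinv_lt_contravar.
        - apply Rmult_lt_0_compat. apply Rinv_0_lt_compat; lra. apply lt_0_INR; lia.
        - apply Rlt_le_trans with (IZR (up (/ (F p - c)))); auto.
          rewrite <- (Z2Nat.id _ Hup), <- INR_IZR_INZ. apply le_INR. unfold i. lia. }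
      destruct (H i) as [K HK].
      destruct (Hlim p (F p - c - / INR (S i))) as [K2 HK2]. lra.
      specialize (HK K2). specialize (HK2 (K + K2)%nat ltac:(lia)).
      apply Rabs_def2 in HK2. lra.
    + intros H i. destruct (Hlim p (/ INR (S i))) as [K HK].
      apply Rinv_0_lt_compat, lt_0_INR; lia.
      exists K. intro n. specialize (HK (K + n)%nat ltac:(lia)). apply Rabs_def2 in HK. lra.
  - apply borel_inter. intro i. apply borel_union. intro K. apply borel_inter. intro n.
    apply borel_le_cont. auto.
Qed.

Section ContU.
Context {U : UniformSpace}.
Lemma cU_plus (f g : U -> R) x : continuous f x -> continuous g x -> continuous (fun y => f y + g y) x.
Proof. intros. apply (continuous_plus (K:=R_AbsRing) (V:=R_NormedModule) f g); auto. Qed.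
Lemma cU_opp (f : U -> R) x : continuous f x -> continuous (fun y => - f y) x.
Proof. intros. apply (continuous_opp (K:=R_AbsRing) (V:=R_NormedModule) f); auto. Qed.
Lemma cU_minus (f g : U -> R) x : continuous f x -> continuous g x -> continuous (fun y => f y - g y) x.
Proof. intros. unfold Rminus. apply cU_plus; auto. apply cU_opp; auto. Qed.
Lemma cU_mult (f g : U -> R) x : continuous f x -> continuous g x -> continuous (fun y => f y * g y) x.
Proof. intros. apply (continuous_mult (K:=R_AbsRing) f g); auto. Qed.
Lemma cU_const (c : R) x : continuous (fun _ : U => c) x.
Proof. apply continuous_const. Qed.
Lemma cU_ext (f g : U -> R) x : (forall y, f y = g y) -> continuous f x -> continuous g x.
Proof. intros. eapply continuous_ext; eauto. Qed.
Lemma cU_rsum (f : nat -> U -> R) N x : (forall m, continuous (f m) x) -> continuous (fun y => rsum (fun m => f m y) N) x.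
Proof.
  intro Hf. induction N. simpl. apply cU_const.
  apply cU_ext with (fun y => rsum (fun m => f m y) N + f N y). intro; reflexivity.
  apply cU_plus; auto.
Qed.
End ContU.

Lemma conv_sq (a : nat -> C) (b c : C) :
  (forall eps, 0 < eps -> exists K, forall k, (K <= k)%nat -> Cmod (Cminus (a k) b) < eps) ->
  forall eps, 0 < eps -> exists K, forall k, (K <= k)%nat ->
    Rabs (Cmod (Cminus (a k) c) ^ 2 - Cmod (Cminus b c) ^ 2) < eps.
Proof.
  intros Ha eps He.
  set (B := Cmod (Cminus b c)).
  assert (HB : 0 <= B) by apply Cmod_ge_0.
  set (del := Rmin 1 (eps / (2 * B + 1))).
  assert (Hdel : 0 < del) by (apply Rmin_pos; [lra| apply Rdiv_lt_0_compat; lra]).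
  destruct (Ha del Hdel) as [K HK]. exists K. intros k Hk. specialize (HK k Hk).
  set (A := Cmod (Cminus (a k) c)).
  assert (HA : Rabs (A - B) <= Cmod (Cminus (a k) b)).
  { unfold A, B. apply Rabs_le. split.
    - pose proof (Cmod_tri3 b (a k) c). rewrite (Cmod_minus_sym b (a k)) in H. lra.
    - pose proof (Cmod_tri3 (a k) b c). lra. }
  replace (A ^ 2 - B ^ 2) with ((A - B) * (A + B)) by ring.
  rewrite Rabs_mult.
  assert (HA0 : 0 <= A) by apply Cmod_ge_0.
  pose proof (Rmin_l 1 (eps / (2 * B + 1))) as Hm1. fold del in Hm1.
  pose proof (Rmin_r 1 (eps / (2 * B + 1))) as Hm2. fold del in Hm2.
  assert (Rabs (A + B) <= 2 * B + 1).
  { rewrite Rabs_right by lra. pose proof (Rle_abs (A - B)). lra. }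
  apply Rle_lt_trans with (Cmod (Cminus (a k) b) * (2 * B + 1)).
  apply Rmult_le_compat; try apply Rabs_pos; lra.
  apply Rlt_le_trans with (del * (2 * B + 1)).
  apply Rmult_lt_compat_r; lra.
  apply Rle_trans with (eps / (2 * B + 1) * (2 * B + 1)).
  apply Rmult_le_compat_r; lra.
  replace (eps / (2 * B + 1) * (2 * B + 1)) with eps by (field; lra). lra.
Qed.

Lemma conv_rsum (x : nat -> nat -> R) (y : nat -> R) N :
  (forall m, (m < N)%nat -> forall eps, 0 < eps -> exists K, forall k, (K <= k)%nat -> Rabs (x k m - y m) < eps) ->
  forall eps, 0 < eps -> exists K, forall k, (K <= k)%nat -> Rabs (rsum (x k) N - rsum y N) < eps.
Proof.
  induction N; intros Hc eps He.
  - exists O. intros. simpl. rewrite Rminus_diag, Rabs_R0. auto.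
  - destruct (IHN (fun m Hm => Hc m ltac:(lia)) (eps/2)) as [K1 H1]. lra.
    destruct (Hc N ltac:(lia) (eps/2)) as [K2 H2]. lra.
    exists (Nat.max K1 K2). intros k Hk. simpl.
    specialize (H1 k ltac:(lia)). specialize (H2 k ltac:(lia)).
    replace (rsum (x k) N + x k N - (rsum y N + y N)) with ((rsum (x k) N - rsum y N) + (x k N - y N)) by ring.
    eapply Rle_lt_trans. apply Rabs_triang. lra.
Qed.

Section BorelL2.
Variable g : R * R -> L2H.
Variable approx : nat -> nat -> R * R -> C.
Hypothesis Hcont : forall m k p, continuous (fun p => Re (approx m k p)) p /\ continuous (fun p => Im (approx m k p)) p.
Hypothesis Hconv : forall m p eps, 0 < eps -> exists K, forall k, (K <= k)%nat ->
  Cmod (Cminus (approx m k p) (lv (g p) m)) < eps.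

Lemma ball_borel (c : L2H) (r : R) : 0 <= r -> borel2 (fun p => hnorm L2H (minus (g p) c) <= r).
Proof.
  intro Hr.
  apply borel_ext with (fun p => forall N, rsum (fun m => Cmod (Cminus (lv (g p) m) (lv c m)) ^ 2) N <= r ^ 2).
  - intro p. assert (Eq : forall m, Cmod (lv (minus (g p) c) m) ^ 2 = Cmod (Cminus (lv (g p) m) (lv c m)) ^ 2).
    { intro. rewrite lv_minus. auto. }
    split.
    + intro H. destruct (rser_bound (fun m => Cmod (lv (minus (g p) c) m) ^ 2) (r ^ 2)) as [_ B].
      intro; apply pow2_ge_0. intro N. rewrite (rsum_ext _ (fun m => Cmod (Cminus (lv (g p) m) (lv c m)) ^ 2)); auto.
      rewrite <- L2H_nrm_sq in B. pose proof (nrm_ge0 L2H (minus (g p) c)).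
      apply Rsqr_incr_0_var; auto. unfold Rsqr. nra.
    + intros H N. rewrite <- (rsum_ext (fun m => Cmod (lv (minus (g p) c) m) ^ 2)) by auto.
      eapply Rle_trans. apply rser_partial_le. intro; apply pow2_ge_0. apply (proj2_sig (minus (g p) c)).
      rewrite <- L2H_nrm_sq. pose proof (nrm_ge0 L2H (minus (g p) c)). apply pow_incr. lra.
  - apply borel_inter. intro N.
    apply (borel_lim_le (fun k p => rsum (fun m => Cmod (Cminus (approx m k p) (lv c m)) ^ 2) N)).
    + intros k p. apply (cU_rsum (fun m p => Cmod (Cminus (approx m k p) (lv c m)) ^ 2)).
      intro m. apply cU_ext with (fun p => (Re (approx m k p) - Re (lv c m)) ^ 2 + (Im (approx m k p) - Im (lv c m)) ^ 2).
      { intro y. rewrite Cmod2_alt. unfold Re, Im. simpl. ring. }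
      destruct (Hcont m k p) as [C1 C2]. simpl.
      apply cU_plus; apply cU_mult; try apply cU_mult; try apply cU_minus; auto; try apply cU_const.
    + intros p eps He. apply (conv_rsum (fun k m => Cmod (Cminus (approx m k p) (lv c m)) ^ 2)
        (fun m => Cmod (Cminus (lv (g p) m) (lv c m)) ^ 2)); auto.
      intros m _ e He'. apply (conv_sq (fun k => approx m k p)). intros. apply Hconv; auto. auto.
Qed.

Lemma borel_fun_g : borel_fun L2H g.
Proof.
  intros O HO. destruct L2H_separable as [D HD].
  set (Cond := fun k i => forall y : L2H, hnorm L2H (minus y (D k)) <= / INR (S i) -> O y).
  set (A := fun n p => let (k, i) := Cantor.of_nat n in Cond k i /\ hnorm L2H (minus (g p) (D k)) <= / INR (S i)).
  apply borel_ext with (fun p => exists n, A n p).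
  - intro p. split.
    + intros [n Hn]. unfold A in Hn. destruct (Cantor.of_nat n) as [k i]. destruct Hn as [Hc Hb].
      apply Hc. auto.
    + intro Hp. destruct (HO _ Hp) as [eps [He Hball]].
      destruct (archimed (2 / eps)) as [Ha _].
      assert (Hup : (0 <= up (2 / eps))%Z).
      { apply le_IZR. assert (0 < 2 / eps) by (apply Rdiv_lt_0_compat; lra). lra. }
      set (i := Z.to_nat (up (2 / eps))).
      assert (Hi : 2 * / INR (S i) < eps).
      { assert (INR (S i) > 2 / eps).
        { apply Rlt_le_trans with (IZR (up (2 / eps))); auto.
          rewrite <- (Z2Nat.id _ Hup), <- INR_IZR_INZ. apply le_INR. unfold i. lia. }
        assert (0 < INR (S i)) by (apply lt_0_INR; lia).
        apply Rmult_lt_reg_r with (INR (S i)); auto.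
        replace (2 * / INR (S i) * INR (S i)) with 2 by (field; lra).
        apply Rmult_lt_reg_l with (/ eps). apply Rinv_0_lt_compat; auto.
        replace (/ eps * 2) with (2 / eps) by (unfold Rdiv; ring).
        replace (/ eps * (eps * INR (S i))) with (INR (S i)) by (field; lra). lra. }
      assert (Hpos : 0 < / INR (S i)) by (apply Rinv_0_lt_compat, lt_0_INR; lia).
      destruct (HD (g p) _ Hpos) as [k Hk].
      exists (Cantor.to_nat (k, i)). unfold A. rewrite Cantor.cancel_of_to. split.
      * intros y Hy. apply Hball. eapply Rle_lt_trans. apply (nrm_tri3 L2H y (D k) (g p)).
        rewrite (nrm_minus_sym L2H (D k) (g p)). lra.
      * lra.
  - apply borel_union. intro n. unfold A. destruct (Cantor.of_nat n) as [k i].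
    destruct (classic (Cond k i)) as [Hc|Hc].
    + apply borel_ext with (fun p => hnorm L2H (minus (g p) (D k)) <= / INR (S i)).
      intro p. tauto. apply ball_borel. left. apply Rinv_0_lt_compat, lt_0_INR; lia.
    + apply borel_ext with (fun _ => False). intro p. tauto. apply borel_empty.
Qed.

End BorelL2.

Lemma is_series_C_inv (a : nat -> C) (l : C) : is_series a l ->
  forall eps, 0 < eps -> exists N, forall n, (N <= n)%nat -> Cmod (Cminus (sum_n a n) l) < eps.
Proof.
  intros Hs eps He.
  assert (He' : 0 < eps / sqrt 2) by (apply Rdiv_lt_0_compat; [lra| apply sqrt_lt_R0; lra]).
  destruct (proj1 (filterlim_locally (sum_n a) l) Hs (mkposreal _ He')) as [N HN].
  exists N. intros n Hn. specialize (HN n Hn). apply C_NormedModule_mixin_compat2 in HN. simpl in HN.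
  replace (sqrt 2 * (eps / sqrt 2)) with eps in HN by (field; apply Rgt_not_eq, sqrt_lt_R0; lra).
  exact HN.
Qed.

Lemma is_series_C_unique (a : nat -> C) (l1 l2 : C) : is_series a l1 -> is_series a l2 -> l1 = l2.
Proof.
  intros H1 H2. apply Ceq_minus. apply Cmod_eq_0. apply Rle_antisym; [|apply Cmod_ge_0].
  apply Rnot_lt_le. intro Hp.
  destruct (is_series_C_inv a l1 H1 (Cmod (Cminus l1 l2) / 2)) as [N1 HN1]. lra.
  destruct (is_series_C_inv a l2 H2 (Cmod (Cminus l1 l2) / 2)) as [N2 HN2]. lra.
  specialize (HN1 (Nat.max N1 N2) ltac:(lia)). specialize (HN2 (Nat.max N1 N2) ltac:(lia)).
  pose proof (Cmod_tri3 l1 (sum_n a (Nat.max N1 N2)) l2).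
  rewrite (Cmod_minus_sym l1 (sum_n a (Nat.max N1 N2))) in H. lra.
Qed.

Lemma csum_im f n : Im (csum f n) = rsum (fun j => Im (f j)) n.
Proof. induction n; simpl; auto. rewrite <- IHn. auto. Qed.

Lemma is_series_Re (a : nat -> C) (l : C) : is_series a l -> is_series (fun n => Re (a n)) (Re l).
Proof.
  intro Hs. apply is_series_R_eps. intros eps He. destruct (is_series_C_inv a l Hs eps He) as [N HN].
  exists N. intros n Hn. specialize (HN n Hn). rewrite sum_n_rsum, <- csum_re, <- sum_n_csum.
  eapply Rle_lt_trans. 2: exact HN.
  replace (Re (sum_n a n) - Re l) with (Re (Cminus (sum_n a n) l)) by (unfold Re; simpl; ring).
  apply re_le_Cmod.
Qed.

Lemma is_series_Im (a : nat -> C) (l : C) : is_series a l -> is_series (fun n => Im (a n)) (Im l).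
Proof.
  intro Hs. apply is_series_R_eps. intros eps He. destruct (is_series_C_inv a l Hs eps He) as [N HN].
  exists N. intros n Hn. specialize (HN n Hn). rewrite sum_n_rsum, <- csum_im, <- sum_n_csum.
  eapply Rle_lt_trans. 2: exact HN.
  replace (Im (sum_n a n) - Im l) with (Im (Cminus (sum_n a n) l)) by (unfold Im; simpl; ring).
  apply Im_le_Cmod.
Qed.

Lemma is_series_scal_C (c : C) (a : nat -> C) (l : C) : is_series a l ->
  is_series (fun n => Cmult c (a n)) (Cmult c l).
Proof.
  intro Hs. apply is_series_C_eps. intros eps He.
  destruct (is_series_C_inv a l Hs (eps / (Cmod c + 1))) as [N HN].
  apply Rdiv_lt_0_compat; [lra| pose proof (Cmod_ge_0 c); lra].
  exists N. intros n Hn. specialize (HN n Hn).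
  rewrite !sum_n_csum in *. rewrite csum_mult_l.
  replace (Cminus (Cmult c (csum a (S n))) (Cmult c l)) with (Cmult c (Cminus (csum a (S n)) l)) by ring.
  rewrite Cmod_mult. pose proof (Cmod_ge_0 c). pose proof (Cmod_ge_0 (Cminus (csum a (S n)) l)).
  apply Rle_lt_trans with ((Cmod c + 1) * Cmod (Cminus (csum a (S n)) l)). nra.
  apply Rmult_lt_reg_l with (/ (Cmod c + 1)). apply Rinv_0_lt_compat; lra.
  rewrite <- Rmult_assoc, Rinv_l, Rmult_1_l by lra. unfold Rdiv in HN. lra.
Qed.

Lemma cont_Re_of (g : R -> C) x : continuous g x -> continuous (fun y => Re (g y)) x.
Proof.
  intro Hc. apply cont_R_eps. intros eps He. destruct (proj1 (cont_C_eps g x) Hc eps He) as [d [Hd Hy]].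
  exists d. split; auto. intros y Hyd. specialize (Hy y Hyd). eapply Rle_lt_trans. 2: exact Hy.
  replace (Re (g y) - Re (g x)) with (Re (Cminus (g y) (g x))) by (unfold Re; simpl; ring). apply re_le_Cmod.
Qed.
Lemma cont_Im_of (g : R -> C) x : continuous g x -> continuous (fun y => Im (g y)) x.
Proof.
  intro Hc. apply cont_R_eps. intros eps He. destruct (proj1 (cont_C_eps g x) Hc eps He) as [d [Hd Hy]].
  exists d. split; auto. intros y Hyd. specialize (Hy y Hyd). eapply Rle_lt_trans. 2: exact Hy.
  replace (Im (g y) - Im (g x)) with (Im (Cminus (g y) (g x))) by (unfold Im; simpl; ring). apply Im_le_Cmod.
Qed.

Lemma cont_fst_comp (h : R -> R) (p : R * R) : continuous h (fst p) -> continuous (fun q : R * R => h (fst q)) p.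
Proof.
  intro Hh. destruct p as [x y]. apply (continuous_comp fst h). apply continuous_fst. exact Hh.
Qed.
Lemma cont_snd_comp (h : R -> R) (p : R * R) : continuous h (snd p) -> continuous (fun q : R * R => h (snd q)) p.
Proof.
  intro Hh. destruct p as [x y]. apply (continuous_comp snd h). apply continuous_snd. exact Hh.
Qed.

Lemma bounded_l2 (x : nat -> C) (B : R) : (forall N, sum_n (fun m => Cmod (x m) ^ 2) N <= B) ->
  l2P x /\ Series (fun m => Cmod (x m) ^ 2) <= B.
Proof.
  intro Hb. apply rser_bound. intro; apply pow2_ge_0.
  intro M. destruct M. simpl. pose proof (Hb O). rewrite sum_n_rsum in H. simpl in H.
  pose proof (pow2_ge_0 (Cmod (x O))). lra.
  rewrite <- sum_n_rsum. auto.
Qed.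

Theorem part2 :
  (forall f : R -> C,
      C2C f ->
      in_h3dual (dd2 f) ->
      exists (H : Hilbert) (a b : R * R -> H),
        separable H /\
        (exists c, forall p, hnorm H (a p) <= c) /\
        (exists c, forall p, hnorm H (b p) <= c) /\
        borel_fun H a /\ borel_fun H b /\
        (forall s t u, dd2 f s t u = hinner H (a (s, t)) (b (t, u)))).
Proof.
  intros f Hf [E [F [alpha [theta [beta [Hlin [[c1 Hc1] [[c2 Hc2] [[c3 Hc3] Hrep]]]]]]]]].
  set (k1 := Rmax c1 1). set (k2 := Rmax c2 1). set (k3 := Rmax c3 1).
  assert (Hk1 : 1 <= k1) by apply Rmax_r. assert (Hk2 : 1 <= k2) by apply Rmax_r.
  assert (Hk3 : 1 <= k3) by apply Rmax_r.
  assert (Hc1' : c1 <= k1) by apply Rmax_l. assert (Hc2' : c2 <= k2) by apply Rmax_l.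
  assert (Hc3' : c3 <= k3) by apply Rmax_l.
  set (K := k1 * k2 * k3).
  assert (HK : 0 < K) by (unfold K; apply Rmult_lt_0_compat; [apply Rmult_lt_0_compat|]; lra).
  set (alpha' := fun s => scal (RtoC (/ k1)) (alpha s)).
  set (theta' := fun t (x : F) => scal (RtoC (/ k2)) (theta t x)).
  set (beta' := fun u => scal (RtoC (/ k3)) (beta u)).
  set (phi' := fun s t u => Cmult (RtoC (/ K)) (dd2 f s t u)).
  assert (Hsc : sep_continuous phi').
  { destruct (sep_cont_dd2 f Hf) as [A1 [A2 A3]]. split; [|split]; intros;
      apply (cont_C_mult (fun _ => RtoC (/ K))); try apply cont_C_const; auto. }
  assert (Hlin' : forall t, Clinear F E (theta' t)).
  { intro t. destruct (Hlin t) as [La Ls]. split.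
    - intros x y. unfold theta'. rewrite La. apply Hscal_distr_l.
    - intros c x. unfold theta'. rewrite Ls, !Hscal_assoc. f_equal. apply Cmult_comm. }
  assert (Hinv : forall k, 1 <= k -> Cmod (RtoC (/ k)) = / k).
  { intros k Hk. rewrite Cmod_R, Rabs_right. auto. apply Rle_ge, Rlt_le, Rinv_0_lt_compat. lra. }
  assert (Ha' : forall s, hnorm E (alpha' s) <= 1).
  { intro s. unfold alpha'. rewrite nrm_scal, Hinv by auto. pose proof (Hc1 s).
    apply Rmult_le_reg_l with k1. lra. rewrite <- Rmult_assoc, Rinv_r, Rmult_1_l by lra. lra. }
  assert (Ht' : forall t x, hnorm E (theta' t x) <= hnorm F x).
  { intros t x. unfold theta'. rewrite nrm_scal, Hinv by auto. pose proof (Hc2 t x).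
    pose proof (nrm_ge0 F x).
    apply Rmult_le_reg_l with k2. lra. rewrite <- Rmult_assoc, Rinv_r, Rmult_1_l by lra. nra. }
  assert (Hb' : forall u, hnorm F (beta' u) <= 1).
  { intro u. unfold beta'. rewrite nrm_scal, Hinv by auto. pose proof (Hc3 u).
    apply Rmult_le_reg_l with k3. lra. rewrite <- Rmult_assoc, Rinv_r, Rmult_1_l by lra. lra. }
  assert (Hphi' : forall s t u, phi' s t u = hinner E (alpha' s) (theta' t (beta' u))).
  { intros s t u. unfold phi', alpha', theta', beta'.
    destruct (Hlin t) as [_ Ls]. rewrite Ls, hinner_scall, !ip_scalr, <- Hrep.
    assert (Cc : forall r, Cconj (RtoC r) = RtoC r) by (intro; apply injective_projections; simpl; ring).
    rewrite !Cc, !Cmult_assoc, <- !RtoC_mult. f_equal. f_equal. unfold K. field. lra. }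
  destruct (part1 phi' E F alpha' theta' beta' Hsc Hlin' Ha' Ht' Hb' Hphi')
    as [am [th [bn [Cam [Cth [Cbn [Sam [Sbn [Hcontr Hser]]]]]]]]].
  assert (Lam : forall s, l2P (fun m => Cmult (RtoC K) (am m s)) /\
              Series (fun m => Cmod (Cmult (RtoC K) (am m s)) ^ 2) <= K ^ 2).
  { intro s. apply bounded_l2. intro N. rewrite sum_n_rsum.
    rewrite (rsum_ext _ (fun m => K ^ 2 * Cmod (am m s) ^ 2)).
    2:{ intros m _. rewrite Cmod_mult, Cmod_R, Rabs_right by lra. ring. }
    assert (Rs : forall (c : R) (g : nat -> R) M, rsum (fun m => c * g m) M = c * rsum g M).
    { intros c g M. induction M; simpl. ring. rewrite IHM. ring. }
    rewrite Rs. pose proof (Sam s N) as Q. rewrite sum_n_rsum in Q. pose proof (pow2_ge_0 K). nra. }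
  assert (Lbn : forall u, l2P (fun n => bn n u) /\ Series (fun n => Cmod (bn n u) ^ 2) <= 1).
  { intro u. apply bounded_l2. apply Sbn. }
  assert (Ych : forall t u, {y : nat -> C | (forall m, is_series (fun n => Cmult (th m n t) (bn n u)) (y m)) /\
       ex_series (fun m => (Cmod (y m))^2) /\
       Series (fun m => (Cmod (y m))^2) <= Series (fun n => (Cmod (bn n u))^2)}).
  { intros t u. apply constructive_indefinite_description. apply Hcontr. apply Lbn. }
  set (Y := fun t u => proj1_sig (Ych t u)).
  assert (HY : forall t u, (forall m, is_series (fun n => Cmult (th m n t) (bn n u)) (Y t u m)) /\
       ex_series (fun m => (Cmod (Y t u m))^2) /\
       Series (fun m => (Cmod (Y t u m))^2) <= Series (fun n => (Cmod (bn n u))^2)).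
  { intros t u. unfold Y. apply (proj2_sig (Ych t u)). }
  set (aL := fun s => (exist _ (fun m => Cmult (RtoC K) (am m s)) (proj1 (Lam s)) : L2H)).
  set (bL := fun t u => (exist _ (Y t u) (proj1 (proj2 (HY t u))) : L2H)).
  exists L2H, (fun p => aL (fst p)), (fun p => bL (fst p) (snd p)).
  split; [|split; [|split; [|split; [|split]]]].
  - apply L2H_separable.
  - exists K. intro p. pose proof (nrm_ge0 L2H (aL (fst p))).
    assert (hnorm L2H (aL (fst p)) ^ 2 <= K ^ 2).
    { rewrite L2H_nrm_sq. apply (proj2 (Lam (fst p))). }
    nra.
  - exists 1. intro p. pose proof (nrm_ge0 L2H (bL (fst p) (snd p))).
    assert (hnorm L2H (bL (fst p) (snd p)) ^ 2 <= 1).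
    { rewrite L2H_nrm_sq. destruct (HY (fst p) (snd p)) as [_ [_ Q]]. pose proof (proj2 (Lbn (snd p))).
      eapply Rle_trans. exact Q. exact H0. }
    nra.
  - apply (borel_fun_g (fun p => aL (fst p)) (fun m k p => Cmult (RtoC K) (am m (fst p)))).
    + intros m k p. split.
      * apply (cont_fst_comp (fun s => Re (Cmult (RtoC K) (am m s)))).
        apply cont_Re_of. apply (cont_C_mult (fun _ => RtoC K)). apply cont_C_const. apply Cam.
      * apply (cont_fst_comp (fun s => Im (Cmult (RtoC K) (am m s)))).
        apply cont_Im_of. apply (cont_C_mult (fun _ => RtoC K)). apply cont_C_const. apply Cam.
    + intros m p eps He. exists O. intros k _. simpl.
      replace (Cminus (Cmult (RtoC K) (am m (fst p))) (Cmult (RtoC K) (am m (fst p)))) with (RtoC 0) by ring.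
      rewrite Cmod_0. auto.
  - apply (borel_fun_g (fun p => bL (fst p) (snd p))
      (fun m k p => csum (fun n => Cmult (th m n (fst p)) (bn n (snd p))) (S k))).
    + intros m k p. split.
      * apply cU_ext with (fun p => rsum (fun n => Re (th m n (fst p)) * Re (bn n (snd p)) -
                                                Im (th m n (fst p)) * Im (bn n (snd p))) (S k)).
        { intro q. rewrite csum_re. apply rsum_ext. intros. unfold Re, Im. simpl. ring. }
        apply (cU_rsum (fun n p => Re (th m n (fst p)) * Re (bn n (snd p)) - Im (th m n (fst p)) * Im (bn n (snd p)))).
        intro n. apply cU_minus; apply cU_mult.
        apply (cont_fst_comp (fun t => Re (th m n t))). apply cont_Re_of, Cth.
        apply (cont_snd_comp (fun u => Re (bn n u))). apply cont_Re_of, Cbn.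
        apply (cont_fst_comp (fun t => Im (th m n t))). apply cont_Im_of, Cth.
        apply (cont_snd_comp (fun u => Im (bn n u))). apply cont_Im_of, Cbn.
      * apply cU_ext with (fun p => rsum (fun n => Re (th m n (fst p)) * Im (bn n (snd p)) +
                                                Im (th m n (fst p)) * Re (bn n (snd p))) (S k)).
        { intro q. rewrite csum_im. apply rsum_ext. intros. unfold Re, Im. simpl. ring. }
        apply (cU_rsum (fun n p => Re (th m n (fst p)) * Im (bn n (snd p)) + Im (th m n (fst p)) * Re (bn n (snd p)))).
        intro n. apply cU_plus; apply cU_mult.
        apply (cont_fst_comp (fun t => Re (th m n t))). apply cont_Re_of, Cth.
        apply (cont_snd_comp (fun u => Im (bn n u))). apply cont_Im_of, Cbn.
        apply (cont_fst_comp (fun t => Im (th m n t))). apply cont_Im_of, Cth.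
        apply (cont_snd_comp (fun u => Re (bn n u))). apply cont_Re_of, Cbn.
    + intros m p eps He. destruct (HY (fst p) (snd p)) as [Hs _].
      destruct (is_series_C_inv _ _ (Hs m) eps He) as [N HN]. exists N. intros k Hk.
      specialize (HN k Hk). rewrite sum_n_csum in HN. exact HN.
  - intros s t u. simpl.
    destruct (Hser s t u) as [y [Hy1 Hy2]].
    assert (Ey : forall m, y m = Y t u m).
    { intro m. apply (is_series_C_unique (fun n => Cmult (th m n t) (bn n u))). apply Hy1.
      apply (HY t u). }
    assert (Hz : is_series (fun m => Cmult (RtoC K) (Cmult (am m s) (Cconj (Y t u m)))) (dd2 f s t u)).
    { replace (dd2 f s t u) with (Cmult (RtoC K) (phi' s t u)).
      apply is_series_scal_C. eapply is_series_ext. 2: exact Hy2. intro m. simpl. rewrite Ey. auto.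
      unfold phi'. rewrite Cmult_assoc, <- RtoC_mult, Rinv_r by lra. apply Cmult_1_l. }
    unfold l2ip. apply injective_projections; simpl.
    + symmetry. apply is_series_unique. eapply is_series_ext. 2: apply (is_series_Re _ _ Hz).
      intro m. unfold l2f, lv, aL, bL. cbn [proj1_sig fst snd]. unfold Re, Im; simpl; ring.
    + symmetry. apply is_series_unique. eapply is_series_ext. 2: apply (is_series_Im _ _ Hz).
      intro m. unfold l2f, lv, aL, bL. cbn [proj1_sig fst snd]. unfold Re, Im; simpl; ring.
Qed.

Theorem proposition5p6 :
  (forall (phi : R -> R -> R -> C) (E F : Hilbert)
          (alpha : R -> E) (theta : R -> F -> E) (beta : R -> F),
      sep_continuous phi ->
      (forall t, Clinear F E (theta t)) ->
      (forall s, hnorm E (alpha s) <= 1) ->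
      (forall t (x : F), hnorm E (theta t x) <= hnorm F x) ->
      (forall u, hnorm F (beta u) <= 1) ->
      (forall s t u, phi s t u = hinner E (alpha s) (theta t (beta u))) ->
      exists (a : nat -> R -> C) (th : nat -> nat -> R -> C) (b : nat -> R -> C),
        (forall m s, continuous (a m) s) /\
        (forall m n t, continuous (th m n) t) /\
        (forall n u, continuous (b n) u) /\
        (forall s N, sum_n (fun m => (Cmod (a m s))^2) N <= 1) /\
        (forall u N, sum_n (fun n => (Cmod (b n u))^2) N <= 1) /\
        (forall t, l2_contraction (fun m n => th m n t)) /\
        (forall s t u, exists y : nat -> C,
            (forall m, is_series (fun n => Cmult (th m n t) (b n u)) (y m)) /\
            is_series (fun m => Cmult (a m s) (Cconj (y m))) (phi s t u)))
  /\
  (forall f : R -> C,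
      C2C f ->
      in_h3dual (dd2 f) ->
      exists (H : Hilbert) (a b : R * R -> H),
        separable H /\
        (exists c, forall p, hnorm H (a p) <= c) /\
        (exists c, forall p, hnorm H (b p) <= c) /\
        borel_fun H a /\ borel_fun H b /\
        (forall s t u, dd2 f s t u = hinner H (a (s, t)) (b (t, u)))).
Proof.
  split.
  - exact part1.
  - exact part2.
Qed.
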